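(* Let $A$ be the adjacency matrix of an Erdős–Rényi graph $G(n,p)$ (symmetric, zero diagonal, independent Bernoulli$(p)$ entries above the diagonal) with $p=p_n$ satisfying $\log n/(np_n)\to0$ and $\limsup_np_n<1$. Let $D$ be the diagonal degree matrix, $\tilde A=D^{-1/2}AD^{-1/2}$, $\mathbf u=\mathbf 1/\sqrt n$ (the principal eigenvector of $\tilde P=\mathcal D^{-1/2}P\mathcal D^{-1/2}$, $P=p(\mathbf 1\mathbf 1^T-I)$, $\mathcal D=(n-1)pI$), $\tilde{\mathbf u}$ the principal unit eigenvector of $\tilde A$ (with nonnegative entries), $\tilde c=\mathbf u^T\tilde{\mathbf u}$ and $\tilde{\mathbf r}=\mathbf u-\tilde c\tilde{\mathbf u}$. Then \[ \|\tilde{\mathbf r}\|^2\sim\frac{1}{4n(n-1)p^2}\sum_i\frac{\bar d_i^2}{n}, \] where $\bar d_i=d_i-(n-1)p$.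
   Context: Asymptotics are as $n\to\infty$; $X_n\sim Y_n$ means $X_n=Y_n(1+o_P(1))$. $d_i=\sum_jA_{ij}$ is the degree of node $i$. ''Principal'' refers to the eigenvalue of largest absolute value. *)

(* Defs.v *)
From Stdlib Require Import Reals List Arith Bool.
Import ListNotations.
Open Scope R_scope.

Definition sumR (n : nat) (f : nat -> R) : R :=
  fold_right Rplus 0 (map f (seq 0 n)).

Definition pairs (n : nat) : list (nat * nat) :=
  flat_map (fun j => map (fun i => (i, j)) (seq 0 j)) (seq 0 n).

Fixpoint bitlists (k : nat) : list (list bool) :=
  match k with
  | O => [[]]
  | S k' => flat_map (fun l => [true :: l; false :: l]) (bitlists k')
  end.

(* a graph on vertices 0..n-1 = edge indicators for each pair in (pairs n) *)
Definition graphs (n : nat) : list (list bool) := bitlists (length (pairs n)).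

Definition edgeb (n : nat) (g : list bool) (i j : nat) : bool :=
  existsb (fun e => match e with ((x, y), b) =>
             andb b (orb (andb (Nat.eqb x i) (Nat.eqb y j)) (andb (Nat.eqb x j) (Nat.eqb y i))) end)
          (combine (pairs n) g).

Definition adj (n : nat) (g : list bool) (i j : nat) : R :=
  if edgeb n g i j then 1 else 0.

Definition deg (n : nat) (g : list bool) (i : nat) : R := sumR n (fun j => adj n g i j).

Definition nadj (n : nat) (g : list bool) (i j : nat) : R :=
  adj n g i j / (sqrt (deg n g i) * sqrt (deg n g j)).

Definition weight (p : R) (g : list bool) : R :=
  fold_right Rmult 1 (map (fun b : bool => if b then p else 1 - p) g).

Definition prob (n : nat) (p : R) (ev : list bool -> bool) : R :=
  fold_right Rplus 0 (map (fun g => weight p g * (if ev g then 1 else 0)) (graphs n)).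

Definition is_eigpair (n : nat) (M : nat -> nat -> R) (lam : R) (v : nat -> R) : Prop :=
  forall i, (i < n)%nat -> sumR n (fun j => M i j * v j) = lam * v i.

Definition eigenvalue (n : nat) (M : nat -> nat -> R) (lam : R) : Prop :=
  exists v, is_eigpair n M lam v /\ exists i, (i < n)%nat /\ v i <> 0.

Definition principal_unit_nonneg_eigvec (n : nat) (M : nat -> nat -> R) (v : nat -> R) : Prop :=
  exists lam, eigenvalue n M lam /\
    (forall mu, eigenvalue n M mu -> Rabs mu <= Rabs lam) /\
    is_eigpair n M lam v /\
    sumR n (fun i => v i ^ 2) = 1 /\
    (forall i, (i < n)%nat -> 0 <= v i).

Definition rtil_sq (n : nat) (ut : nat -> R) : R :=
  let c := sumR n (fun i => / sqrt (INR n) * ut i) in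
  sumR n (fun i => (/ sqrt (INR n) - c * ut i) ^ 2).

Definition rhs (n : nat) (p : R) (g : list bool) : R :=
  / (4 * INR n * (INR n - 1) * p ^ 2) *
  sumR n (fun i => (deg n g i - (INR n - 1) * p) ^ 2 / INR n).

Definition Rltb (a b : R) : bool := if Rlt_dec a b then true else false.

(* the event that X = Y (1 + Z) fails with |Z| <= eps *)
Definition deviates (eps X Y : R) : bool := Rltb (eps * Rabs Y) (Rabs (X - Y)).

(* Main.v *)
Require Import Defs.
From Stdlib Require Import Reals List Arith Lia Lra Psatz Bool.
From Stdlib Require Import FunctionalExtensionality.
Import ListNotations.
Open Scope R_scope.

Lemma sumR_0 f : sumR 0 f = 0.
Proof. reflexivity. Qed.

Lemma sumR_S_r n f : sumR (S n) f = sumR n f + f n.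
Proof.
  unfold sumR. rewrite seq_S, map_app, fold_right_app. simpl.
  generalize (map f (seq 0 n)). intro l. induction l; simpl; lra.
Qed.

Lemma sumR_ext n f g : (forall i, (i < n)%nat -> f i = g i) -> sumR n f = sumR n g.
Proof.
  induction n; intros H. reflexivity.
  rewrite !sumR_S_r. rewrite IHn by (intros; apply H; lia). rewrite H by lia. reflexivity.
Qed.

Lemma sumR_S_l n f : sumR (S n) f = f 0%nat + sumR n (fun i => f (S i)).
Proof.
  induction n. unfold sumR; simpl; lra.
  rewrite sumR_S_r, IHn, sumR_S_r. lra.
Qed.

Lemma sumR_plus n f g : sumR n (fun i => f i + g i) = sumR n f + sumR n g.
Proof. induction n. unfold sumR; simpl; lra. rewrite !sumR_S_r, IHn. lra. Qed.

Lemma sumR_minus n f g : sumR n (fun i => f i - g i) = sumR n f - sumR n g.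
Proof. induction n. unfold sumR; simpl; lra. rewrite !sumR_S_r, IHn. lra. Qed.

Lemma sumR_scal n c f : sumR n (fun i => c * f i) = c * sumR n f.
Proof. induction n. unfold sumR; simpl; lra. rewrite !sumR_S_r, IHn. lra. Qed.

Lemma sumR_const n c : sumR n (fun _ => c) = INR n * c.
Proof. induction n. unfold sumR; simpl; lra. rewrite !sumR_S_r, IHn, S_INR. lra. Qed.

Lemma sumR_le n f g : (forall i, (i < n)%nat -> f i <= g i) -> sumR n f <= sumR n g.
Proof.
  induction n; intros H. unfold sumR; simpl; lra.
  rewrite !sumR_S_r. assert (f n <= g n) by (apply H; lia).
  assert (sumR n f <= sumR n g) by (apply IHn; intros; apply H; lia). lra.
Qed.

Lemma sumR_nonneg n f : (forall i, (i < n)%nat -> 0 <= f i) -> 0 <= sumR n f.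
Proof.
  intros H. replace 0 with (sumR n (fun _ => 0)). apply sumR_le; auto.
  rewrite sumR_const; lra.
Qed.

Lemma sumR_term n f i : (forall j, (j < n)%nat -> 0 <= f j) -> (i < n)%nat -> f i <= sumR n f.
Proof.
  induction n; intros H Hi. lia.
  rewrite sumR_S_r. destruct (Nat.eq_dec i n).
  - subst. assert (0 <= sumR n f) by (apply sumR_nonneg; intros; apply H; lia). lra.
  - assert (f i <= sumR n f) by (apply IHn; [intros; apply H; lia | lia]).
    assert (0 <= f n) by (apply H; lia). lra.
Qed.

Lemma sumR_zero_each n f i : (forall j, (j < n)%nat -> 0 <= f j) -> sumR n f = 0 -> (i < n)%nat -> f i = 0.
Proof.
  intros H H0 Hi. assert (f i <= sumR n f) by (apply sumR_term; auto).
  assert (0 <= f i) by auto. lra.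
Qed.

Definition lsum {A} (L : list A) (F : A -> R) : R := fold_right Rplus 0 (map F L).

Lemma lsum_app {A} (L1 L2 : list A) F : lsum (L1 ++ L2) F = lsum L1 F + lsum L2 F.
Proof. unfold lsum. rewrite map_app, fold_right_app. induction L1; simpl; [lra|]. rewrite IHL1; lra. Qed.

Lemma lsum_flat_map {A B} (L : list A) (h : A -> list B) F :
  lsum (flat_map h L) F = lsum L (fun a => lsum (h a) F).
Proof. induction L; simpl. reflexivity. rewrite lsum_app. unfold lsum in *; simpl. rewrite IHL. reflexivity. Qed.

Lemma lsum_plus {A} (L : list A) F G : lsum L (fun a => F a + G a) = lsum L F + lsum L G.
Proof. induction L; unfold lsum in *; simpl; [lra|]. rewrite IHL; lra. Qed.

Lemma lsum_scal {A} (L : list A) c F : lsum L (fun a => c * F a) = c * lsum L F.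
Proof. induction L; unfold lsum in *; simpl; [lra|]. rewrite IHL; lra. Qed.

Lemma lsum_le {A} (L : list A) F G : (forall a, In a L -> F a <= G a) -> lsum L F <= lsum L G.
Proof.
  induction L; intros H; unfold lsum in *; simpl; [lra|].
  assert (F a <= G a) by (apply H; simpl; auto).
  assert (fold_right Rplus 0 (map F L) <= fold_right Rplus 0 (map G L)) by (apply IHL; intros; apply H; simpl; auto).
  lra.
Qed.

Lemma lsum_ext {A} (L : list A) F G : (forall a, In a L -> F a = G a) -> lsum L F = lsum L G.
Proof.
  intros H; apply Rle_antisym; apply lsum_le; intros a Ha; rewrite (H a Ha); lra.
Qed.

Lemma bitlists_length k g : In g (bitlists k) -> length g = k.
Proof.
  revert g; induction k; simpl; intros g H.
  - destruct H as [H|[]]; subst; reflexivity.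
  - apply in_flat_map in H. destruct H as [l [Hl H]]. simpl in H.
    destruct H as [H|[H|[]]]; subst; simpl; rewrite (IHk l Hl); reflexivity.
Qed.

Lemma bitlists_complete k g : length g = k -> In g (bitlists k).
Proof.
  revert g; induction k; intros g H.
  - destruct g; [simpl; auto | discriminate].
  - destruct g as [|b g]; [discriminate|]. simpl in H. simpl. apply in_flat_map.
    exists g. split. apply IHk; lia. destruct b; simpl; auto.
Qed.

Definition E (p : R) (k : nat) (f : list bool -> R) : R :=
  lsum (bitlists k) (fun g => weight p g * f g).

Lemma E_0 p f : E p 0 f = f [].
Proof. unfold E, lsum; simpl. unfold weight; simpl. lra. Qed.

Lemma E_S p k f : E p (S k) f = p * E p k (fun g => f (true :: g)) + (1 - p) * E p k (fun g => f (false :: g)).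
Proof.
  unfold E. simpl bitlists. rewrite lsum_flat_map.
  rewrite <- !lsum_scal, <- lsum_plus. apply lsum_ext. intros a _.
  unfold lsum, weight; simpl. lra.
Qed.

Lemma E_plus p k f g : E p k (fun x => f x + g x) = E p k f + E p k g.
Proof. revert f g; induction k; intros. rewrite !E_0; lra. rewrite !E_S, !IHk. lra. Qed.

Lemma E_scal p k c f : E p k (fun x => c * f x) = c * E p k f.
Proof. revert f; induction k; intros. rewrite !E_0; lra. rewrite !E_S, !IHk. lra. Qed.

Lemma E_const p k c : E p k (fun _ => c) = c.
Proof. induction k. rewrite E_0; lra. rewrite E_S, IHk. lra. Qed.

Lemma E_ext p k f g : (forall x, length x = k -> f x = g x) -> E p k f = E p k g.
Proof.
  revert f g; induction k; intros f g H.
  - rewrite !E_0; apply H; reflexivity.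
  - rewrite !E_S. rewrite (IHk (fun x => f (true :: x)) (fun x => g (true :: x))) by (intros; apply H; simpl; lia).
    rewrite (IHk (fun x => f (false :: x)) (fun x => g (false :: x))) by (intros; apply H; simpl; lia).
    reflexivity.
Qed.

Lemma E_mono p k f g : 0 <= p <= 1 -> (forall x, length x = k -> f x <= g x) -> E p k f <= E p k g.
Proof.
  intros Hp. revert f g; induction k; intros f g H.
  - rewrite !E_0; apply H; reflexivity.
  - rewrite !E_S.
    assert (E p k (fun x => f (true :: x)) <= E p k (fun x => g (true :: x))) by (apply IHk; intros; apply H; simpl; lia).
    assert (E p k (fun x => f (false :: x)) <= E p k (fun x => g (false :: x))) by (apply IHk; intros; apply H; simpl; lia).
    nra.
Qed.

Lemma E_minus p k f g : E p k (fun x => f x - g x) = E p k f - E p k g.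
Proof.
  revert f g; induction k; intros. rewrite !E_0; lra. rewrite !E_S, !IHk. lra.
Qed.

Lemma E_app p k m f : E p (k + m) f = E p k (fun g1 => E p m (fun g2 => f (g1 ++ g2))).
Proof.
  revert f; induction k; intros f.
  - rewrite E_0. reflexivity.
  - simpl plus. rewrite !E_S. rewrite !IHk. reflexivity.
Qed.

Lemma E_lsum {A} p k (L : list A) (F : A -> list bool -> R) :
  E p k (fun g => lsum L (fun a => F a g)) = lsum L (fun a => E p k (F a)).
Proof.
  induction L; unfold lsum in *; simpl.
  - apply E_const.
  - rewrite E_plus. rewrite <- IHL. reflexivity.
Qed.

Definition ind (b : bool) : R := if b then 1 else 0.

Lemma prob_E n p ev : prob n p ev = E p (length (pairs n)) (fun g => ind (ev g)).
Proof. reflexivity. Qed.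

Lemma pairs_S n : pairs (S n) = pairs n ++ map (fun i => (i, n)) (seq 0 n).
Proof. unfold pairs. rewrite seq_S, flat_map_app. simpl. rewrite app_nil_r. reflexivity. Qed.

Lemma length_pairs_S n : length (pairs (S n)) = (length (pairs n) + n)%nat.
Proof. rewrite pairs_S, length_app, length_map, length_seq. reflexivity. Qed.

Lemma pairs_bound n x y : In (x, y) (pairs n) -> (x < y < n)%nat.
Proof.
  unfold pairs. intros H. apply in_flat_map in H. destruct H as [j [Hj H]].
  apply in_map_iff in H. destruct H as [i [Hi Hi2]]. inversion Hi; subst.
  apply in_seq in Hj. apply in_seq in Hi2. lia.
Qed.

Lemma existsb_ext' {A} (f g : A -> bool) l : (forall x, f x = g x) -> existsb f l = existsb g l.
Proof. intros H; induction l; simpl; auto. rewrite H, IHl; reflexivity. Qed.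

Lemma edgeb_sym n g i j : edgeb n g i j = edgeb n g j i.
Proof.
  unfold edgeb. apply existsb_ext'. intros [[x y] b]. f_equal. apply orb_comm.
Qed.

Lemma edgeb_out n g i j : (n <= i \/ n <= j)%nat -> edgeb n g i j = false.
Proof.
  intros Hij. unfold edgeb. destruct (existsb _ _) eqn:E; auto.
  apply existsb_exists in E. destruct E as [[[x y] b] [Hin Hf]].
  apply in_combine_l in Hin. apply pairs_bound in Hin.
  apply andb_true_iff in Hf. destruct Hf as [_ Hf].
  apply orb_true_iff in Hf. destruct Hf as [Hf|Hf]; apply andb_true_iff in Hf; destruct Hf as [H1 H2];
  apply Nat.eqb_eq in H1; apply Nat.eqb_eq in H2; subst; lia.
Qed.

Lemma combine_app {A B} (l1 l2 : list A) (g1 g2 : list B) :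
  length l1 = length g1 -> combine (l1 ++ l2) (g1 ++ g2) = combine l1 g1 ++ combine l2 g2.
Proof.
  revert g1; induction l1; intros g1 H; destruct g1; simpl in *; try discriminate; auto.
  rewrite IHl1 by lia. reflexivity.
Qed.

Definition F2 (i j : nat) (e : nat * nat * bool) : bool :=
  match e with ((x, y), b) => andb b (orb (andb (Nat.eqb x i) (Nat.eqb y j)) (andb (Nat.eqb x j) (Nat.eqb y i))) end.

Lemma edgeb_S n g1 g2 i j : length g1 = length (pairs n) ->
  edgeb (S n) (g1 ++ g2) i j = orb (edgeb n g1 i j)
     (existsb (F2 i j) (combine (map (fun x => (x, n)) (seq 0 n)) g2)).
Proof.
  intros H. unfold edgeb. rewrite pairs_S, combine_app by auto. rewrite existsb_app. reflexivity.
Qed.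

Lemma part2_lt n s m g2 i j : (s + m <= n)%nat -> (i < n)%nat -> (j < n)%nat ->
  existsb (F2 i j) (combine (map (fun x => (x, n)) (seq s m)) g2) = false.
Proof.
  revert s g2; induction m; intros s g2 Hs Hi Hj; simpl. reflexivity.
  destruct g2 as [|b g2]; simpl. reflexivity.
  rewrite IHm by lia.
  destruct (Nat.eqb_spec n j); [lia|]. destruct (Nat.eqb_spec n i); [lia|].
  destruct b, (s =? i), (s =? j); reflexivity.
Qed.

Lemma part2_nn n s m g2 : (s + m <= n)%nat ->
  existsb (F2 n n) (combine (map (fun x => (x, n)) (seq s m)) g2) = false.
Proof.
  revert s g2; induction m; intros s g2 Hs; simpl. reflexivity.
  destruct g2 as [|b g2]; simpl. reflexivity.
  rewrite IHm by lia.
  destruct (Nat.eqb_spec s n); [lia|]. destruct b; reflexivity.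
Qed.

Lemma part2_in n s m g2 i : (s + m <= n)%nat -> (i < n)%nat ->
  existsb (F2 i n) (combine (map (fun x => (x, n)) (seq s m)) g2) =
  andb (andb (Nat.leb s i) (Nat.ltb i (s + m))) (nth (i - s) g2 false).
Proof.
  revert s g2; induction m; intros s g2 Hs Hi; simpl.
  - destruct (Nat.leb_spec s i); destruct (Nat.ltb_spec i (s + 0)); simpl; auto; lia.
  - destruct g2 as [|b g2].
    + simpl. destruct (i - s)%nat; simpl; rewrite !andb_false_r; reflexivity.
    + cbn [seq map combine existsb]. rewrite IHm by lia. cbn [F2].
      destruct (Nat.eqb_spec s n); [lia|]. destruct (Nat.eqb_spec n i); [lia|].
      rewrite Nat.eqb_refl.
      destruct (Nat.eqb_spec s i).
      * subst. rewrite Nat.sub_diag.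
        replace (i <=? i)%nat with true by (symmetry; apply Nat.leb_le; lia).
        replace (S i <=? i)%nat with false by (symmetry; apply Nat.leb_gt; lia).
        replace (i <? i + S m)%nat with true by (symmetry; apply Nat.ltb_lt; lia).
        destruct b; reflexivity.
      * rewrite ?andb_false_r, ?andb_false_l, ?orb_false_l, ?andb_false_r, ?orb_false_l.
        destruct (Nat.leb_spec (S s) i).
        -- replace (S s <=? i)%nat with true by (symmetry; apply Nat.leb_le; lia). replace (s <=? i)%nat with true by (symmetry; apply Nat.leb_le; lia).
           replace (i - s)%nat with (S (i - S s)) by lia. cbn [nth].
           replace (S s + m)%nat with (s + S m)%nat by lia. reflexivity.
        -- replace (s <=? i)%nat with false by (symmetry; apply Nat.leb_gt; lia). reflexivity.
Qed.

Lemma adj_S_lt n g1 g2 i j : length g1 = length (pairs n) -> (i < n)%nat -> (j < n)%nat ->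
  adj (S n) (g1 ++ g2) i j = adj n g1 i j.
Proof.
  intros H Hi Hj. unfold adj. rewrite edgeb_S by auto. rewrite part2_lt by lia. rewrite orb_false_r. reflexivity.
Qed.

Lemma adj_S_in n g1 g2 i : length g1 = length (pairs n) -> (i < n)%nat ->
  adj (S n) (g1 ++ g2) i n = ind (nth i g2 false).
Proof.
  intros H Hi. unfold adj. rewrite edgeb_S by auto. rewrite edgeb_out by lia.
  rewrite part2_in by lia. simpl. rewrite Nat.sub_0_r.
  destruct (Nat.ltb_spec i n); [|lia]. simpl. reflexivity.
Qed.

Lemma adj_sym n g i j : adj n g i j = adj n g j i.
Proof. unfold adj. rewrite edgeb_sym. reflexivity. Qed.

Lemma adj_S_nn n g1 g2 : length g1 = length (pairs n) -> adj (S n) (g1 ++ g2) n n = 0.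
Proof.
  intros H. unfold adj. rewrite edgeb_S by auto. rewrite edgeb_out by lia.
  rewrite part2_nn by lia. reflexivity.
Qed.

Lemma adj_01 n g i j : adj n g i j = 0 \/ adj n g i j = 1.
Proof. unfold adj. destruct edgeb; auto. Qed.

Lemma adj_nonneg n g i j : 0 <= adj n g i j.
Proof. destruct (adj_01 n g i j) as [H|H]; rewrite H; lra. Qed.

Lemma deg_S_lt n g1 g2 i : length g1 = length (pairs n) -> (i < n)%nat ->
  deg (S n) (g1 ++ g2) i = deg n g1 i + ind (nth i g2 false).
Proof.
  intros H Hi. unfold deg. rewrite sumR_S_r. rewrite adj_S_in by auto.
  f_equal. apply sumR_ext. intros j Hj. apply adj_S_lt; auto.
Qed.

Lemma deg_S_n n g1 g2 : length g1 = length (pairs n) ->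
  deg (S n) (g1 ++ g2) n = sumR n (fun j => ind (nth j g2 false)).
Proof.
  intros H. unfold deg. rewrite sumR_S_r. rewrite adj_S_nn by auto. rewrite Rplus_0_r.
  apply sumR_ext. intros j Hj. rewrite adj_sym. apply adj_S_in; auto.
Qed.

Lemma deg_nonneg n g i : 0 <= deg n g i.
Proof. unfold deg. apply sumR_nonneg. intros; apply adj_nonneg. Qed.

Section Inner.
Variable p : R.

Fixpoint Zl (g : list bool) : R := match g with [] => 0 | b :: g' => (ind b - p) + Zl g' end.
Fixpoint Pl (g : list bool) : R := match g with [] => 0 | b :: g' => (ind b - p)^2 + Pl g' end.
Fixpoint Ll (c : nat -> R) (g : list bool) : R :=
  match g with [] => 0 | b :: g' => c 0%nat * (ind b - p) + Ll (fun i => c (S i)) g' end.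

Definition M3 := p * (1 - p)^3 + (1 - p) * (- p)^3.
Definition M4 := p * (1 - p)^4 + (1 - p) * p^4.

Lemma E_sq_shift k a f : E p k (fun g => (a + f g)^2) = a^2 + 2 * a * E p k f + E p k (fun g => f g ^2).
Proof.
  rewrite (E_ext p k _ (fun g => a^2 + ((2*a) * f g + f g ^2))) by (intros; ring).
  rewrite !E_plus, E_const, E_scal. ring.
Qed.

Lemma E_4_shift k a f : E p k (fun g => (a + f g)^4) =
  a^4 + 4 * a^3 * E p k f + 6 * a^2 * E p k (fun g => f g^2) + 4 * a * E p k (fun g => f g^3) + E p k (fun g => f g^4).
Proof.
  rewrite (E_ext p k _ (fun g => a^4 + ((4*a^3) * f g + ((6*a^2) * f g^2 + ((4*a) * f g^3 + f g^4))))) by (intros; ring).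
  rewrite !E_plus, E_const, !E_scal. ring.
Qed.

Lemma E_prod_shift k a b f h : E p k (fun g => (a + f g) * (b + h g)) =
  a * b + a * E p k h + b * E p k f + E p k (fun g => f g * h g).
Proof.
  rewrite (E_ext p k _ (fun g => a*b + (a * h g + (b * f g + f g * h g)))) by (intros; ring).
  rewrite !E_plus, E_const, !E_scal. ring.
Qed.

Lemma E_prod_sq k a b f h : E p k (fun g => (a + f g) * (b + h g)^2) =
  a * b^2 + 2*a*b * E p k h + a * E p k (fun g => h g^2) + b^2 * E p k f
  + 2 * b * E p k (fun g => f g * h g) + E p k (fun g => f g * h g^2).
Proof.
  rewrite (E_ext p k _ (fun g => a*b^2 + ((2*a*b) * h g + (a * h g^2 + (b^2 * f g +
     ((2*b) * (f g * h g) + f g * h g^2)))))) by (intros; ring).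
  rewrite !E_plus, E_const, !E_scal. ring.
Qed.

Lemma EZ1 m : E p m Zl = 0.
Proof.
  induction m. rewrite E_0; reflexivity.
  rewrite E_S. cbn [Zl ind]. rewrite !E_plus, !E_const, IHm. ring.
Qed.

Lemma EZ2 m : E p m (fun g => Zl g ^2) = INR m * (p * (1 - p)).
Proof.
  induction m. rewrite E_0; simpl; ring.
  rewrite E_S. cbn [Zl ind]. rewrite !E_sq_shift, EZ1, IHm, S_INR. ring.
Qed.

Lemma EZ4 m : E p m (fun g => Zl g ^4) = INR m * M4 + 3 * INR m * (INR m - 1) * (p * (1 - p))^2.
Proof.
  induction m. rewrite E_0; simpl; ring.
  rewrite E_S. cbn [Zl ind]. rewrite !E_4_shift, EZ1, EZ2, IHm, S_INR. unfold M4. ring.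
Qed.

Lemma EP1 m : E p m Pl = INR m * (p * (1 - p)).
Proof.
  induction m. rewrite E_0; simpl; ring.
  rewrite E_S. cbn [Pl ind]. rewrite !E_plus, !E_const, IHm, S_INR. ring.
Qed.

Lemma EP2 m : E p m (fun g => Pl g ^2) = INR m * M4 + INR m * (INR m - 1) * (p * (1 - p))^2.
Proof.
  induction m. rewrite E_0; simpl; ring.
  rewrite E_S. cbn [Pl ind]. rewrite !E_sq_shift, EP1, IHm, S_INR. unfold M4. ring.
Qed.

Lemma EPZ m : E p m (fun g => Pl g * Zl g ^2) = INR m * M4 + INR m * (INR m - 1) * (p * (1 - p))^2.
Proof.
  induction m. rewrite E_0; simpl; ring.
  rewrite E_S. cbn [Pl Zl ind]. rewrite !E_prod_sq, EP1, EZ1, EZ2, IHm, S_INR. unfold M4. ring.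
Qed.

Lemma EL1 m c : E p m (Ll c) = 0.
Proof.
  revert c; induction m; intros c. rewrite E_0; reflexivity.
  rewrite E_S. cbn [Ll ind]. rewrite !E_plus, !E_const, IHm. ring.
Qed.

Lemma EL2 m c : E p m (fun g => Ll c g ^2) = p * (1 - p) * sumR m (fun i => c i ^2).
Proof.
  revert c; induction m; intros c. rewrite E_0; simpl; unfold sumR; simpl; ring.
  rewrite E_S. cbn [Ll ind]. rewrite !E_sq_shift, EL1, IHm, sumR_S_l. ring.
Qed.

Lemma ELP m c : E p m (fun g => Ll c g * Pl g) = M3 * sumR m c.
Proof.
  revert c; induction m; intros c. rewrite E_0; simpl; unfold sumR; simpl; ring.
  rewrite E_S. cbn [Ll Pl ind]. rewrite !E_prod_shift, EL1, EP1, IHm, sumR_S_l. unfold M3. ring.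
Qed.

Lemma ELZ2 m c : E p m (fun g => Ll c g * Zl g ^2) = M3 * sumR m c.
Proof.
  revert c; induction m; intros c. rewrite E_0; simpl; unfold sumR; simpl; ring.
  rewrite E_S. cbn [Ll Zl ind]. rewrite !E_prod_sq, EL1, EZ1, EZ2, IHm, sumR_S_l. unfold M3. ring.
Qed.

Lemma E_sep m (F : nat -> bool -> R) :
  E p m (fun g => sumR m (fun i => F i (nth i g false))) = sumR m (fun i => p * F i true + (1 - p) * F i false).
Proof.
  revert F; induction m; intros F. rewrite E_0; reflexivity.
  rewrite E_S. rewrite !(E_ext p m (fun g => sumR (S m) (fun i => F i (nth i (_ :: g) false)))
     (fun g => _ + sumR m (fun i => F (S i) (nth i g false)))) by (intros; rewrite sumR_S_l; reflexivity).
  cbn [nth]. rewrite !E_plus, !E_const, (IHm (fun i b => F (S i) b)). rewrite (sumR_S_l m). ring_simplify.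
  reflexivity.
Qed.

End Inner.

Lemma Zl_sum p g : Zl p g = sumR (length g) (fun i => ind (nth i g false) - p).
Proof. induction g; simpl. reflexivity. rewrite sumR_S_l. simpl. rewrite IHg. reflexivity. Qed.
Lemma Pl_sum p g : Pl p g = sumR (length g) (fun i => (ind (nth i g false) - p)^2).
Proof. induction g; simpl. reflexivity. rewrite sumR_S_l. simpl. rewrite IHg. reflexivity. Qed.
Lemma Ll_sum p c g : Ll p c g = sumR (length g) (fun i => c i * (ind (nth i g false) - p)).
Proof. revert c; induction g; intros c; simpl. reflexivity. rewrite sumR_S_l. simpl. rewrite IHg. reflexivity. Qed.

Definition dbar n p g i := deg n g i - (INR n - 1) * p.
Definition Dsum n p g := sumR n (dbar n p g).
Definition Q2 n p g := sumR n (fun i => dbar n p g i ^ 2).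
Definition Q4 n p g := sumR n (fun i => dbar n p g i ^ 4).

Section G.
Variable p : R.

Lemma dbar_S_lt n g1 g2 i : length g1 = length (pairs n) -> (i < n)%nat ->
  dbar (S n) p (g1 ++ g2) i = dbar n p g1 i + (ind (nth i g2 false) - p).
Proof. intros H Hi. unfold dbar. rewrite deg_S_lt by auto. rewrite S_INR. ring. Qed.

Lemma dbar_S_n n g1 g2 : length g1 = length (pairs n) -> length g2 = n ->
  dbar (S n) p (g1 ++ g2) n = Zl p g2.
Proof.
  intros H H2. unfold dbar. rewrite deg_S_n by auto. rewrite Zl_sum, H2, sumR_minus, sumR_const, S_INR. ring.
Qed.

Lemma Dsum_S n g1 g2 : length g1 = length (pairs n) -> length g2 = n ->
  Dsum (S n) p (g1 ++ g2) = Dsum n p g1 + 2 * Zl p g2.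
Proof.
  intros H H2. unfold Dsum. rewrite sumR_S_r, dbar_S_n by auto.
  rewrite (sumR_ext n _ (fun i => dbar n p g1 i + (ind (nth i g2 false) - p))) by (intros; apply dbar_S_lt; auto).
  rewrite sumR_plus. rewrite (Zl_sum p g2), H2. ring.
Qed.

Lemma Q2_S n g1 g2 : length g1 = length (pairs n) -> length g2 = n ->
  Q2 (S n) p (g1 ++ g2) = Q2 n p g1 + 2 * Ll p (dbar n p g1) g2 + Pl p g2 + Zl p g2 ^ 2.
Proof.
  intros H H2. unfold Q2. rewrite sumR_S_r, dbar_S_n by auto.
  rewrite (sumR_ext n _ (fun i => dbar n p g1 i ^2 + (2 * (dbar n p g1 i * (ind (nth i g2 false) - p)) + (ind (nth i g2 false) - p)^2)))
    by (intros; rewrite dbar_S_lt by auto; ring).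
  rewrite !sumR_plus, sumR_scal. rewrite Ll_sum, Pl_sum, H2. ring.
Qed.

Lemma Q4_S n g1 g2 : length g1 = length (pairs n) -> length g2 = n ->
  Q4 (S n) p (g1 ++ g2) = sumR n (fun i => (dbar n p g1 i + (ind (nth i g2 false) - p))^4) + Zl p g2 ^ 4.
Proof.
  intros H H2. unfold Q4. rewrite sumR_S_r, dbar_S_n by auto. f_equal.
  apply sumR_ext. intros; rewrite dbar_S_lt by auto; ring.
Qed.

Lemma E_graph_S n f : E p (length (pairs (S n))) f =
  E p (length (pairs n)) (fun g1 => E p n (fun g2 => f (g1 ++ g2))).
Proof. rewrite length_pairs_S. apply E_app. Qed.

Lemma GD1 n : E p (length (pairs n)) (Dsum n p) = 0.
Proof.
  induction n. unfold Dsum; simpl. rewrite E_0. reflexivity.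
  rewrite E_graph_S.
  rewrite (E_ext p _ _ (fun g1 => Dsum n p g1)). exact IHn.
  intros g1 H1. rewrite (E_ext p n _ (fun g2 => Dsum n p g1 + 2 * Zl p g2)) by (intros; apply Dsum_S; auto).
  rewrite E_plus, E_const, E_scal, EZ1. ring.
Qed.

Lemma GD2 n : E p (length (pairs n)) (fun g => Dsum n p g ^ 2) = 2 * INR n * (INR n - 1) * (p * (1 - p)).
Proof.
  induction n. unfold Dsum; simpl. rewrite E_0. rewrite sumR_0. simpl. ring.
  rewrite E_graph_S.
  rewrite (E_ext p _ _ (fun g1 => Dsum n p g1 ^2 + 4 * INR n * (p * (1 - p)))).
  rewrite E_plus, E_const, IHn, S_INR. ring.
  intros g1 H1. rewrite (E_ext p n _ (fun g2 => (Dsum n p g1 + (fun g => 2 * Zl p g) g2)^2)) by (intros; rewrite Dsum_S; auto).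
  rewrite E_sq_shift, E_scal, EZ1.
  rewrite (E_ext p n _ (fun g2 => 4 * Zl p g2 ^2)) by (intros; cbv beta; ring). rewrite E_scal, EZ2. ring.
Qed.

Lemma sep2 n (c : nat -> R) : E p n (fun g2 => sumR n (fun i => (c i + (ind (nth i g2 false) - p))^2)) =
  sumR n (fun i => c i ^2) + INR n * (p * (1 - p)).
Proof.
  rewrite (E_sep p n (fun i b => (c i + (ind b - p))^2)).
  rewrite <- sumR_const, <- sumR_plus. apply sumR_ext. intros; simpl; ring.
Qed.

Lemma sep4 n (c : nat -> R) : E p n (fun g2 => sumR n (fun i => (c i + (ind (nth i g2 false) - p))^4)) =
  sumR n (fun i => c i ^4) + 6 * (p * (1 - p)) * sumR n (fun i => c i ^2) + 4 * M3 p * sumR n c + INR n * M4 p.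
Proof.
  rewrite (E_sep p n (fun i b => (c i + (ind b - p))^4)).
  rewrite <- !sumR_scal, <- sumR_const, <- !sumR_plus. apply sumR_ext. intros; simpl; unfold M3, M4; ring.
Qed.

Lemma GQ2 n : E p (length (pairs n)) (Q2 n p) = INR n * (INR n - 1) * (p * (1 - p)).
Proof.
  induction n. simpl. rewrite E_0. unfold Q2. rewrite sumR_0. simpl. ring.
  rewrite E_graph_S.
  rewrite (E_ext p _ _ (fun g1 => Q2 n p g1 + 2 * INR n * (p * (1 - p)))).
  rewrite E_plus, E_const, IHn, S_INR. ring.
  intros g1 H1. rewrite (E_ext p n _ (fun g2 => Q2 n p g1 + (2 * Ll p (dbar n p g1) g2 + (Pl p g2 + Zl p g2 ^ 2))))
    by (intros; rewrite Q2_S by auto; ring).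
  rewrite !E_plus, E_const, E_scal, EL1, EP1, EZ2. ring.
Qed.

Lemma GQ4eq n : E p (length (pairs (S n))) (Q4 (S n) p) =
  E p (length (pairs n)) (Q4 n p) + 6 * (p * (1 - p)) * (INR n * (INR n - 1) * (p * (1 - p)))
  + 2 * INR n * M4 p + 3 * INR n * (INR n - 1) * (p * (1 - p))^2.
Proof.
  rewrite E_graph_S.
  rewrite (E_ext p _ _ (fun g1 => Q4 n p g1 + ((6 * (p * (1 - p))) * Q2 n p g1 + ((4 * M3 p) * Dsum n p g1
       + (2 * INR n * M4 p + 3 * INR n * (INR n - 1) * (p * (1 - p))^2))))).
  rewrite !E_plus, !E_scal, !E_const, GQ2, GD1. ring.
  intros g1 H1. rewrite (E_ext p n _ (fun g2 => sumR n (fun i => (dbar n p g1 i + (ind (nth i g2 false) - p))^4) + Zl p g2 ^4))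
    by (intros; apply Q4_S; auto).
  rewrite E_plus, sep4, EZ4. unfold Q4, Q2, Dsum. ring.
Qed.

Lemma M4_le : 0 <= p <= 1 -> 0 <= M4 p <= p * (1 - p).
Proof.
  intros Hp. unfold M4. assert (0 <= 1 - p) by lra.
  assert (0 <= p * (1-p)) by nra.
  split. assert (0 <= p^4) by (apply pow_le; lra). assert (0 <= (1-p)^4) by (apply pow_le; lra). nra.
  replace (p * (1 - p) ^ 4 + (1 - p) * p ^ 4) with (p * (1-p) * ((1-p)^3 + p^3)) by ring.
  assert ((1-p)^3 + p^3 <= 1).
  { replace ((1-p)^3 + p^3) with (1 - 3 * (p * (1-p))) by ring. lra. }
  assert (0 <= (1-p)^3 + p^3). { assert (0 <= p^3) by (apply pow_le; lra). assert (0 <= (1-p)^3) by (apply pow_le; lra). lra. }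
  nra.
Qed.

Lemma GQ4 n : 0 <= p <= 1 -> E p (length (pairs n)) (Q4 n p) <= 3 * INR n ^ 3 * (p * (1 - p))^2 + INR n ^ 2 * (p * (1 - p)).
Proof.
  intros Hp. destruct (M4_le Hp) as [HM1 HM2]. set (s := p * (1 - p)) in *.
  assert (0 <= s) by (unfold s; nra).
  induction n. simpl. rewrite E_0. unfold Q4. rewrite sumR_0. simpl. nra.
  rewrite GQ4eq. fold s. rewrite S_INR.
  assert (0 <= INR n) by apply pos_INR.
  assert (INR n * M4 p <= INR n * s) by nra.
  assert (0 <= INR n * s * s) by nra.
  nra.
Qed.

Lemma GQ2sq_eq n : E p (length (pairs (S n))) (fun g => Q2 (S n) p g ^2) =
  E p (length (pairs n)) (fun g => Q2 n p g ^2) + (4 * INR n + 4) * (p * (1 - p)) * (INR n * (INR n - 1) * (p * (1 - p)))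
  + 4 * INR n * M4 p + 6 * INR n * (INR n - 1) * (p * (1 - p))^2.
Proof.
  rewrite E_graph_S.
  rewrite (E_ext p _ _ (fun g1 => Q2 n p g1 ^2 + (((4 * INR n + 4) * (p * (1 - p))) * Q2 n p g1 + ((8 * M3 p) * Dsum n p g1
       + (4 * INR n * M4 p + 6 * INR n * (INR n - 1) * (p * (1 - p))^2))))).
  rewrite !E_plus, !E_scal, !E_const, GQ2, GD1. ring.
  intros g1 H1.
  rewrite (E_ext p n _ (fun g2 => (Q2 n p g1 + (fun g => 2 * Ll p (dbar n p g1) g + Pl p g + Zl p g ^ 2) g2)^2))
    by (intros; rewrite Q2_S by auto; cbv beta; ring).
  rewrite E_sq_shift.
  rewrite (E_ext p n (fun g => 2 * Ll p (dbar n p g1) g + Pl p g + Zl p g ^ 2) (fun g => 2 * Ll p (dbar n p g1) g + (Pl p g + Zl p g ^ 2)))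
    by (intros; ring).
  rewrite !E_plus, E_scal, EL1, EP1, EZ2.
  rewrite (E_ext p n (fun g => (2 * Ll p (dbar n p g1) g + Pl p g + Zl p g ^ 2)^2)
     (fun g => 4 * Ll p (dbar n p g1) g ^2 + (Pl p g ^2 + (Zl p g ^4 + (4 * (Ll p (dbar n p g1) g * Pl p g)
        + (4 * (Ll p (dbar n p g1) g * Zl p g ^2) + 2 * (Pl p g * Zl p g ^2)))))))
    by (intros; ring).
  rewrite !E_plus, !E_scal, EL2, EP2, EZ4, ELP, ELZ2, EPZ.
  unfold Q2, Dsum. ring.
Qed.

Lemma GQ2sq n : 0 <= p <= 1 -> E p (length (pairs n)) (fun g => Q2 n p g ^2) <=
  (INR n * (INR n - 1) * (p * (1 - p)))^2 + 2 * INR n ^3 * (p * (1 - p))^2 + 2 * INR n ^2 * (p * (1 - p)).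
Proof.
  intros Hp. destruct (M4_le Hp) as [HM1 HM2]. set (s := p * (1 - p)) in *.
  assert (0 <= s) by (unfold s; nra).
  induction n. simpl. rewrite E_0. unfold Q2. rewrite sumR_0. simpl. nra.
  rewrite GQ2sq_eq. fold s. rewrite S_INR.
  assert (0 <= INR n) by apply pos_INR.
  assert (INR n * M4 p <= INR n * s) by nra.
  assert (0 <= INR n * s * s) by nra.
  nra.
Qed.

End G.

Fixpoint cntb (n : nat) (f : nat -> bool) : nat :=
  match n with O => O | S n' => (cntb n' f + (if f n' then 1 else 0))%nat end.

Lemma cntb_S_l n f : cntb (S n) f = ((if f 0%nat then 1 else 0) + cntb n (fun i => f (S i)))%nat.
Proof. induction n; simpl in *. lia. rewrite IHn. lia. Qed.

Lemma cntb_ext n f g : (forall i, (i < n)%nat -> f i = g i) -> cntb n f = cntb n g.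
Proof. induction n; intros H; simpl. auto. rewrite IHn by (intros; apply H; lia). rewrite H by lia. auto. Qed.

Lemma cntb_compl n f : (cntb n f + cntb n (fun i => negb (f i)) = n)%nat.
Proof. induction n; simpl. auto. destruct (f n); simpl; lia. Qed.

Lemma cntb_le n f : (cntb n f <= n)%nat.
Proof. pose proof (cntb_compl n f). lia. Qed.

Definition allN (n : nat) (P : nat -> bool) : bool := forallb P (seq 0 n).

Lemma allN_true n P : allN n P = true <-> (forall i, (i < n)%nat -> P i = true).
Proof.
  unfold allN. rewrite forallb_forall. split; intros H i Hi.
  apply H. apply in_seq. lia. apply in_seq in Hi. apply H. lia.
Qed.

Lemma allN_S_l n P : allN (S n) P = P 0%nat && allN n (fun i => P (S i)).
Proof.
  apply eq_true_iff_eq. rewrite andb_true_iff, !allN_true. split.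
  - intros H. split. apply H; lia. intros; apply H; lia.
  - intros [H0 H] i Hi. destruct i. auto. apply H. lia.
Qed.

Definition closedf n (s : nat -> bool) (g : list bool) : bool :=
  allN n (fun i => allN n (fun j => implb (s i && negb (s j)) (negb (edgeb n g i j)))).

Lemma closedf_true n s g : closedf n s g = true <->
  (forall i j, (i < n)%nat -> (j < n)%nat -> s i = true -> s j = false -> edgeb n g i j = false).
Proof.
  unfold closedf. rewrite allN_true. split.
  - intros H i j Hi Hj Hs1 Hs2. specialize (H i Hi). rewrite allN_true in H. specialize (H j Hj).
    rewrite Hs1, Hs2 in H. simpl in H. destruct (edgeb n g i j); auto.
  - intros H i Hi. rewrite allN_true. intros j Hj.
    destruct (s i) eqn:E1; destruct (s j) eqn:E2; simpl; auto. rewrite H; auto.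
Qed.

Definition cutf n (s : nat -> bool) (g2 : list bool) : bool :=
  allN n (fun i => implb (xorb (s i) (s n)) (negb (nth i g2 false))).

Lemma closedf_S n s g1 g2 : length g1 = length (pairs n) ->
  closedf (S n) s (g1 ++ g2) = closedf n s g1 && cutf n s g2.
Proof.
  intros Hl. apply eq_true_iff_eq. rewrite andb_true_iff, !closedf_true. unfold cutf. rewrite allN_true.
  assert (Hin : forall i, (i < n)%nat -> edgeb (S n) (g1 ++ g2) i n = nth i g2 false).
  { intros i Hi. pose proof (adj_S_in n g1 g2 i Hl Hi). unfold adj, ind in H.
    destruct (edgeb _ _ i n), (nth i g2 false); simpl in H; auto; exfalso; first [apply R1_neq_R0; exact H | apply R1_neq_R0; symmetry; exact H | discriminate H]. }
  assert (Hlt : forall i j, (i < n)%nat -> (j < n)%nat -> edgeb (S n) (g1 ++ g2) i j = edgeb n g1 i j).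
  { intros i j Hi Hj. rewrite edgeb_S by auto. rewrite part2_lt by lia. apply orb_false_r. }
  split.
  - intros H. split.
    + intros i j Hi Hj H1 H2. rewrite <- Hlt by auto. apply H; auto; lia.
    + intros i Hi. destruct (s i) eqn:E1; destruct (s n) eqn:E2; simpl; auto.
      * rewrite <- Hin by auto. rewrite H; auto; lia.
      * rewrite <- Hin by auto. rewrite edgeb_sym. rewrite H; auto; lia.
  - intros [H1 H2] i j Hi Hj Hs1 Hs2.
    destruct (Nat.eq_dec i n); destruct (Nat.eq_dec j n); subst; try congruence.
    + assert (j < n)%nat by lia. rewrite edgeb_sym, Hin by auto. specialize (H2 j H).
      rewrite Hs1, Hs2 in H2. simpl in H2. destruct (nth j g2 false); auto.
    + assert (i < n)%nat by lia. rewrite Hin by auto. specialize (H2 i H).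
      rewrite Hs1, Hs2 in H2. simpl in H2. destruct (nth i g2 false); auto.
    + rewrite Hlt by lia. apply H1; auto; lia.
Qed.


Lemma ind_andb a b : ind (a && b) = ind a * ind b.
Proof. destruct a, b; simpl; lra. Qed.

Lemma ind_01 b : 0 <= ind b <= 1.
Proof. destruct b; simpl; lra. Qed.

Lemma Ecut p n (c : nat -> bool) :
  E p n (fun g2 => ind (allN n (fun i => implb (c i) (negb (nth i g2 false))))) = (1 - p) ^ (cntb n c).
Proof.
  revert c; induction n; intros c.
  - rewrite E_0. reflexivity.
  - assert (Hx : forall b, (fun g => ind (allN (S n) (fun i => implb (c i) (negb (nth i (b :: g) false))))) =
       (fun g => ind (implb (c 0%nat) (negb b)) * ind (allN n (fun i => implb (c (S i)) (negb (nth i g false)))))).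
    { intros b. apply functional_extensionality. intros g. rewrite allN_S_l. apply ind_andb. }
    rewrite E_S, (Hx true), (Hx false), !E_scal, (IHn (fun i => c (S i))).
    rewrite cntb_S_l. destruct (c 0%nat); simpl; ring.
Qed.

Lemma Eclosed p n s : E p (length (pairs n)) (fun g => ind (closedf n s g)) =
  (1 - p) ^ (cntb n s * cntb n (fun i => negb (s i))).
Proof.
  induction n.
  - simpl. rewrite E_0. reflexivity.
  - rewrite E_graph_S.
    rewrite (E_ext p _ _ (fun g1 => (1 - p) ^ (cntb n (fun i => xorb (s i) (s n))) * ind (closedf n s g1))).
    + rewrite E_scal, IHn. rewrite <- pow_add. f_equal.
      rewrite (cntb_ext n (fun i => xorb (s i) (s n)) (if s n then (fun i => negb (s i)) else s))
        by (intros; destruct (s n); [apply xorb_true_r | apply xorb_false_r]).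
      simpl. destruct (s n); simpl; lia.
    + intros g1 H1. rewrite (E_ext p n _ (fun g2 => ind (closedf n s g1) * ind (cutf n s g2)))
        by (intros; rewrite closedf_S by auto; apply ind_andb).
      rewrite E_scal. unfold cutf. rewrite Ecut. ring.
Qed.

Lemma Sb_cons n (F : list bool -> R) :
  lsum (bitlists (S n)) F = lsum (bitlists n) (fun s => F (true :: s)) + lsum (bitlists n) (fun s => F (false :: s)).
Proof.
  simpl. rewrite lsum_flat_map, <- lsum_plus. apply lsum_ext. intros s _. unfold lsum; simpl. ring.
Qed.

Definition sfun (s : list bool) (i : nat) : bool := nth i s false.

Lemma sum_pow r n : lsum (bitlists n) (fun s => r ^ cntb n (sfun s)) = (1 + r) ^ n.
Proof.
  induction n. unfold lsum; simpl; ring.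
  rewrite Sb_cons.
  rewrite (lsum_ext _ (fun s => r ^ cntb (S n) (sfun (true :: s))) (fun s => r * r ^ cntb n (sfun s)))
    by (intros; rewrite cntb_S_l; unfold sfun; simpl; ring).
  rewrite (lsum_ext _ (fun s => r ^ cntb (S n) (sfun (false :: s))) (fun s => r ^ cntb n (sfun s)))
    by (intros; rewrite cntb_S_l; unfold sfun; simpl; ring).
  rewrite lsum_scal, IHn. simpl. ring.
Qed.

Lemma sum_pow_neg r n : lsum (bitlists n) (fun s => r ^ cntb n (fun i => negb (sfun s i))) = (1 + r) ^ n.
Proof.
  induction n. unfold lsum; simpl; ring.
  rewrite Sb_cons.
  rewrite (lsum_ext _ (fun s => r ^ cntb (S n) (fun i => negb (sfun (true :: s) i))) (fun s => r ^ cntb n (fun i => negb (sfun s i))))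
    by (intros; rewrite cntb_S_l; unfold sfun; simpl; ring).
  rewrite (lsum_ext _ (fun s => r ^ cntb (S n) (fun i => negb (sfun (false :: s) i))) (fun s => r * r ^ cntb n (fun i => negb (sfun s i))))
    by (intros; rewrite cntb_S_l; unfold sfun; simpl; ring).
  rewrite lsum_scal, IHn. simpl. ring.
Qed.

Lemma sum_zero n : lsum (bitlists n) (fun s => ind (Nat.eqb (cntb n (sfun s)) 0)) = 1.
Proof.
  induction n. unfold lsum; simpl; ring.
  rewrite Sb_cons.
  rewrite (lsum_ext _ (fun s => ind (Nat.eqb (cntb (S n) (sfun (true :: s))) 0)) (fun s => 0))
    by (intros; rewrite cntb_S_l; unfold sfun; simpl; reflexivity).
  rewrite (lsum_ext _ (fun s => ind (Nat.eqb (cntb (S n) (sfun (false :: s))) 0)) (fun s => ind (Nat.eqb (cntb n (sfun s)) 0)))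
    by (intros; rewrite cntb_S_l; unfold sfun; simpl; reflexivity).
  rewrite IHn. replace (lsum (bitlists n) (fun _ : list bool => 0)) with (0 * lsum (bitlists n) (fun _ : list bool => 0)).
  lra. rewrite <- lsum_scal. apply lsum_ext; intros; ring.
Qed.

Lemma sum_zero_neg n : lsum (bitlists n) (fun s => ind (Nat.eqb (cntb n (fun i => negb (sfun s i))) 0)) = 1.
Proof.
  induction n. unfold lsum; simpl; ring.
  rewrite Sb_cons.
  rewrite (lsum_ext _ (fun s => ind (Nat.eqb (cntb (S n) (fun i => negb (sfun (false :: s) i))) 0)) (fun s => 0))
    by (intros; rewrite cntb_S_l; unfold sfun; simpl; reflexivity).
  rewrite (lsum_ext _ (fun s => ind (Nat.eqb (cntb (S n) (fun i => negb (sfun (true :: s) i))) 0)) (fun s => ind (Nat.eqb (cntb n (fun i => negb (sfun s i))) 0)))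
    by (intros; rewrite cntb_S_l; unfold sfun; simpl; reflexivity).
  rewrite IHn. replace (lsum (bitlists n) (fun _ : list bool => 0)) with (0 * lsum (bitlists n) (fun _ : list bool => 0)).
  lra. rewrite <- lsum_scal. apply lsum_ext; intros; ring.
Qed.

Lemma lsum_minus {A} (L : list A) F G : lsum L (fun a => F a - G a) = lsum L F - lsum L G.
Proof. induction L; unfold lsum in *; simpl; [lra|]. rewrite IHL; lra. Qed.

Lemma pow_le1 x k : 0 <= x <= 1 -> 0 <= x ^ k <= 1.
Proof. intros Hx. induction k; simpl. lra. nra. Qed.

Lemma pow_decr x a b : 0 <= x <= 1 -> (a <= b)%nat -> x ^ b <= x ^ a.
Proof.
  intros Hx Hab. replace b with (a + (b - a))%nat by lia. rewrite pow_add.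
  assert (0 <= x ^ a) by (apply pow_le; lra).
  pose proof (pow_le1 x (b - a) Hx). nra.
Qed.

Lemma ind_existsb {A} (f : A -> bool) L : ind (existsb f L) <= lsum L (fun a => ind (f a)).
Proof.
  induction L; simpl. unfold lsum; simpl; lra.
  unfold lsum in *; simpl. destruct (f a); simpl.
  - assert (0 <= fold_right Rplus 0 (map (fun a0 : A => ind (f a0)) L)).
    { clear IHL. induction L; simpl. lra. pose proof (ind_01 (f a0)). lra. }
    lra.
  - lra.
Qed.

Definition nonconst n s := negb (Nat.eqb (cntb n (sfun s)) 0) && negb (Nat.eqb (cntb n (fun i => negb (sfun s i))) 0).
Definition B1 n g := existsb (fun s => nonconst n s && closedf n (sfun s) g) (bitlists n).

Lemma cut_bound q n kt kf : 0 <= q <= 1 -> (kt + kf = n)%nat ->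
  q ^ (kt * kf) <= (sqrt q ^ n) ^ kt + (sqrt q ^ n) ^ kf.
Proof.
  intros Hq Hn. set (sq := sqrt q).
  assert (Hsq : 0 <= sq <= 1).
  { unfold sq. split. apply sqrt_pos. rewrite <- sqrt_1. apply sqrt_le_1_alt. lra. }
  assert (Hq2 : q = sq ^ 2) by (unfold sq; rewrite pow2_sqrt; lra).
  rewrite Hq2, <- !pow_mult.
  assert (0 <= (sq ^ (n * kt))) by (apply pow_le; lra).
  assert (0 <= (sq ^ (n * kf))) by (apply pow_le; lra).
  destruct (Nat.le_gt_cases (2 * kt) n).
  - assert (sq ^ (2 * (kt * kf)) <= sq ^ (n * kt)) by (apply pow_decr; auto; nia). lra.
  - assert (sq ^ (2 * (kt * kf)) <= sq ^ (n * kf)) by (apply pow_decr; auto; nia). lra.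
Qed.

Lemma PB1 p n : 0 <= p <= 1 ->
  E p (length (pairs n)) (fun g => ind (B1 n g)) <= 2 * ((1 + sqrt (1 - p) ^ n) ^ n - 1).
Proof.
  intros Hp. set (r := sqrt (1 - p) ^ n).
  eapply Rle_trans.
  { apply E_mono. auto. intros g _. apply (ind_existsb (fun s => nonconst n s && closedf n (sfun s) g)). }
  rewrite E_lsum.
  rewrite (lsum_ext _ _ (fun s => ind (nonconst n s) * (1 - p) ^ (cntb n (sfun s) * cntb n (fun i => negb (sfun s i))))).
  2:{ intros s _. rewrite (E_ext p _ _ (fun g => ind (nonconst n s) * ind (closedf n (sfun s) g))) by (intros; apply ind_andb).
      rewrite E_scal, Eclosed. reflexivity. }
  eapply Rle_trans.
  { apply lsum_le. intros s Hs.
    instantiate (1 := fun s => (r ^ cntb n (sfun s) - ind (Nat.eqb (cntb n (sfun s)) 0)) +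
                               (r ^ cntb n (fun i => negb (sfun s i)) - ind (Nat.eqb (cntb n (fun i => negb (sfun s i))) 0))).
    simpl. pose proof (cntb_compl n (sfun s)).
    assert (0 <= r) by (unfold r; apply pow_le; apply sqrt_pos).
    assert (Hq : 0 <= 1 - p <= 1) by lra.
    pose proof (cut_bound (1 - p) n _ _ Hq H). fold r in H1.
    unfold nonconst.
    destruct (Nat.eqb_spec (cntb n (sfun s)) 0) as [E1|E1]; destruct (Nat.eqb_spec (cntb n (fun i => negb (sfun s i))) 0) as [E2|E2];
      simpl.
    - rewrite E1, E2. simpl. lra.
    - rewrite E1. simpl. assert (0 <= r ^ cntb n (fun i => negb (sfun s i))) by (apply pow_le; auto). lra.
    - rewrite E2. simpl. assert (0 <= r ^ cntb n (sfun s)) by (apply pow_le; auto). lra.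
    - lra. }
  rewrite lsum_plus, !lsum_minus, sum_pow, sum_pow_neg, sum_zero, sum_zero_neg. lra.
Qed.

Lemma bernoulli r n : 0 <= r <= 1 -> 1 - INR n * r <= (1 - r) ^ n.
Proof.
  intros Hr. induction n. simpl. lra.
  rewrite S_INR. simpl. assert (0 <= INR n) by apply pos_INR. nra.
Qed.

Lemma binom_small r n : 0 <= r -> INR n * r <= 1/2 -> (1 + r) ^ n - 1 <= 2 * INR n * r.
Proof.
  intros Hr Hnr. destruct n.
  - simpl. lra.
  - assert (1 <= INR (S n)) by (rewrite S_INR; pose proof (pos_INR n); lra).
    assert (Hr1 : r <= 1) by nra.
    set (A := (1 + r) ^ S n). set (B := (1 - r) ^ S n).
    assert (HB : 1 - INR (S n) * r <= B) by (apply bernoulli; lra).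
    assert (HAB : A * B <= 1).
    { unfold A, B. rewrite <- Rpow_mult_distr. apply pow_le1. nra. }
    assert (HA : 1 <= A) by (unfold A; apply pow_R1_Rle; lra).
    assert (A * (1 - INR (S n) * r) <= 1) by nra.
    nra.
Qed.

Lemma nth_map_seq (f : nat -> bool) n j : (j < n)%nat -> nth j (map f (seq 0 n)) false = f j.
Proof.
  intros Hj. rewrite (nth_indep _ false (f 0%nat)) by (rewrite length_map, length_seq; lia).
  rewrite map_nth, seq_nth by lia. reflexivity.
Qed.

Lemma cntb_pos n f i : (i < n)%nat -> f i = true -> cntb n f <> 0%nat.
Proof.
  induction n; intros Hi Hf. lia. simpl. destruct (Nat.eq_dec i n). subst. rewrite Hf. lia.
  specialize (IHn ltac:(lia) Hf). lia.
Qed.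

Lemma B1_false_closed n g (s : nat -> bool) i j :
  B1 n g = false -> (i < n)%nat -> (j < n)%nat -> s i = true -> s j = false ->
  closedf n s g = false.
Proof.
  intros HB Hi Hj Hsi Hsj.
  destruct (closedf n s g) eqn:Hc; auto. exfalso.
  set (sl := map s (seq 0 n)).
  assert (Hsl : forall k, (k < n)%nat -> sfun sl k = s k) by (intros; apply nth_map_seq; auto).
  assert (Hin : In sl (bitlists n)) by (apply bitlists_complete; unfold sl; rewrite length_map, length_seq; auto).
  unfold B1 in HB. assert (existsb (fun s0 => nonconst n s0 && closedf n (sfun s0) g) (bitlists n) = true).
  { apply existsb_exists. exists sl. split; auto. apply andb_true_iff. split.
    - unfold nonconst. apply andb_true_iff. split; apply negb_true_iff; apply Nat.eqb_neq.
      + apply (cntb_pos n _ i); auto. rewrite Hsl; auto.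
      + apply (cntb_pos n _ j); auto. rewrite Hsl; auto. rewrite Hsj; auto.
    - rewrite closedf_true in *. intros a b Ha Hb H1 H2. rewrite Hsl in H1, H2 by auto. apply Hc; auto. }
  congruence.
Qed.

Lemma deg_pos_conn n g i : (2 <= n)%nat -> B1 n g = false -> (i < n)%nat -> 0 < deg n g i.
Proof.
  intros Hn HB Hi.
  destruct (Rlt_dec 0 (deg n g i)) as [H|H]; auto. exfalso.
  assert (Hd : deg n g i = 0) by (pose proof (deg_nonneg n g i); lra).
  set (s := fun k => Nat.eqb k i).
  assert (exists j, (j < n)%nat /\ j <> i) as [j [Hj Hji]] by (destruct (Nat.eq_dec i 0); [exists 1%nat | exists 0%nat]; lia).
  assert (Hc : closedf n s g = false) by (apply (B1_false_closed n g s i j); auto; unfold s; [apply Nat.eqb_refl | apply Nat.eqb_neq; auto]).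
  assert (closedf n s g = true); [|congruence].
  apply closedf_true. intros a b Ha Hb H1 H2. unfold s in H1. apply Nat.eqb_eq in H1. subst a.
  assert (adj n g i b = 0).
  { unfold deg in Hd. apply (sumR_zero_each n (adj n g i)); auto. intros; apply adj_nonneg. }
  unfold adj in H0. destruct (edgeb n g i b); auto. lra.
Qed.

Lemma exists_max (f : nat -> R) n : (1 <= n)%nat -> exists i0, (i0 < n)%nat /\ forall i, (i < n)%nat -> f i <= f i0.
Proof.
  induction n; intros Hn. lia.
  destruct (Nat.eq_dec n 0). subst. exists 0%nat. split. lia. intros; replace i with 0%nat by lia; lra.
  destruct IHn as [i0 [Hi0 H]]. lia.
  destruct (Rle_dec (f n) (f i0)).
  - exists i0. split. lia. intros i Hi. destruct (Nat.eq_dec i n). subst; auto. apply H; lia.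
  - exists n. split. lia. intros i Hi. destruct (Nat.eq_dec i n). subst; lra. specialize (H i ltac:(lia)). lra.
Qed.

Lemma sumR_pos_exists n f : sumR n f <> 0 -> exists i, (i < n)%nat /\ f i <> 0.
Proof.
  induction n; intros H. unfold sumR in H; simpl in H. lra.
  rewrite sumR_S_r in H. destruct (Req_dec (f n) 0).
  - destruct IHn as [i [Hi Hf]]. lra. exists i; split; auto.
  - exists n; split; auto.
Qed.

Lemma div_sqrt x : 0 < x -> x / sqrt x = sqrt x.
Proof.
  intros H. assert (0 < sqrt x) by (apply sqrt_lt_R0; auto).
  apply (Rmult_eq_reg_r (sqrt x)); [|lra]. unfold Rdiv. rewrite Rmult_assoc, Rinv_l by lra.
  rewrite Rmult_1_r. symmetry; apply sqrt_sqrt; lra.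
Qed.

Lemma eigvec_form n g v : (2 <= n)%nat -> B1 n g = false ->
  principal_unit_nonneg_eigvec n (nadj n g) v ->
  forall i, (i < n)%nat -> v i = sqrt (deg n g i) / sqrt (sumR n (deg n g)).
Proof.
  intros Hn HB [lam [Heig [Hmax [Hpair [Hunit Hnn]]]]].
  set (d := deg n g).
  assert (Hd : forall i, (i < n)%nat -> 0 < d i) by (intros; apply deg_pos_conn; auto).
  assert (Hsd : forall i, (i < n)%nat -> 0 < sqrt (d i)) by (intros; apply sqrt_lt_R0; auto).
  assert (Hsd2 : forall i, (i < n)%nat -> sqrt (d i) * sqrt (d i) = d i) by (intros; apply sqrt_sqrt; pose proof (Hd i H); lra).
  assert (H1 : Rabs 1 <= Rabs lam).
  { apply Hmax. exists (fun j => sqrt (d j)). split.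
    - intros i Hi. unfold nadj. fold d.
      rewrite (sumR_ext n _ (fun j => / sqrt (d i) * adj n g i j)).
      + rewrite sumR_scal. fold (deg n g i). fold d. pose proof (Hsd2 i Hi). pose proof (Hsd i Hi).
        change (sumR n (adj n g i)) with (d i). apply (Rmult_eq_reg_l (sqrt (d i))); [|lra]. rewrite <- Rmult_assoc, Rinv_r by lra. rewrite !Rmult_1_l. symmetry; exact H.
      + intros j Hj. pose proof (Hsd i Hi). pose proof (Hsd j Hj). field. split; lra.
    - exists 0%nat. split. lia. pose proof (Hsd 0%nat ltac:(lia)). lra. }
  rewrite Rabs_R1 in H1.
  set (w := fun j => v j / sqrt (d j)).
  assert (Hw0 : forall j, (j < n)%nat -> 0 <= w j).
  { intros j Hj. unfold w. pose proof (Hnn j Hj). pose proof (Hsd j Hj). unfold Rdiv; apply Rmult_le_pos; [lra | apply Rlt_le, Rinv_0_lt_compat; lra]. }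
  assert (Hrel : forall i, (i < n)%nat -> sumR n (fun j => adj n g i j * w j) = lam * d i * w i).
  { intros i Hi. specialize (Hpair i Hi). unfold nadj in Hpair. fold d in Hpair.
    rewrite (sumR_ext n _ (fun j => / sqrt (d i) * (adj n g i j * w j))) in Hpair.
    2:{ intros j Hj. unfold w. pose proof (Hsd i Hi). pose proof (Hsd j Hj). field. split; lra. }
    rewrite sumR_scal in Hpair. pose proof (Hsd i Hi). pose proof (Hsd2 i Hi).
    apply (Rmult_eq_compat_l (sqrt (d i))) in Hpair.
    rewrite <- Rmult_assoc, Rinv_r, Rmult_1_l in Hpair by lra. rewrite Hpair. unfold w.
    replace (lam * d i * (v i / sqrt (d i))) with (lam * v i * (d i / sqrt (d i))) by (field; lra).
    rewrite div_sqrt by (apply Hd; auto). ring. }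
  destruct (exists_max w n) as [i0 [Hi0 Hmaxw]]. lia.
  set (M := w i0).
  assert (HM : 0 < M).
  { destruct (sumR_pos_exists n (fun i => v i ^ 2)) as [k [Hk Hvk]]. lra.
    assert (0 < v k). { pose proof (Hnn k Hk). destruct (Req_dec (v k) 0). rewrite H0 in Hvk. simpl in Hvk; lra. lra. }
    assert (0 < w k). { unfold w. apply Rdiv_lt_0_compat; auto. }
    specialize (Hmaxw k Hk). unfold M. lra. }
  assert (Hup : sumR n (fun j => adj n g i0 j * w j) <= M * d i0).
  { unfold d, deg. rewrite <- sumR_scal. apply sumR_le. intros j Hj. specialize (Hmaxw j Hj). pose proof (adj_nonneg n g i0 j).
    fold M in Hmaxw. nra. }
  assert (Hlo : 0 <= sumR n (fun j => adj n g i0 j * w j)).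
  { apply sumR_nonneg. intros j Hj. pose proof (adj_nonneg n g i0 j). pose proof (Hw0 j Hj). nra. }
  rewrite Hrel in Hup, Hlo by auto. fold M in Hup, Hlo.
  pose proof (Hd i0 Hi0).
  assert (Hlam : lam = 1).
  { assert (lam <= 1). { assert (0 < d i0 * M) by nra. nra. }
    assert (0 <= lam). { assert (0 < d i0 * M) by nra. nra. }
    rewrite Rabs_right in H1 by lra. lra. }
  subst lam.
  (* harmonic *)
  assert (Hall : forall j, (j < n)%nat -> w j = M).
  { set (s := fun k => if Req_EM_T (w k) M then true else false).
    assert (Hcl : closedf n s g = true).
    { apply closedf_true. intros a b Ha Hb Hsa Hsb. unfold s in Hsa, Hsb.
      destruct (Req_EM_T (w a) M) as [Ea|]; [|discriminate]. destruct (Req_EM_T (w b) M) as [|Eb]; [discriminate|].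
      assert (Hz : sumR n (fun j => adj n g a j * (M - w j)) = 0).
      { rewrite (sumR_ext n _ (fun j => M * adj n g a j - adj n g a j * w j)) by (intros; ring).
        rewrite sumR_minus, sumR_scal, Hrel by auto. change (sumR n (adj n g a)) with (d a). rewrite Ea. ring. }
      assert (adj n g a b * (M - w b) = 0).
      { apply (sumR_zero_each n (fun j => adj n g a j * (M - w j))); auto.
        intros j Hj. pose proof (adj_nonneg n g a j). pose proof (Hmaxw j Hj). fold M in H2. nra. }
      assert (M - w b <> 0) by lra.
      assert (adj n g a b = 0) by (apply Rmult_integral in H0; destruct H0; auto; contradiction).
      unfold adj in H3. destruct (edgeb n g a b); auto. lra. }
    intros j Hj. destruct (Req_EM_T (w j) M) as [|Ej]; auto. exfalso.
    assert (closedf n s g = false); [|congruence].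
    apply (B1_false_closed n g s i0 j); auto; unfold s.
    - destruct (Req_EM_T (w i0) M); auto.
    - destruct (Req_EM_T (w j) M); auto. contradiction. }
  assert (Hv : forall j, (j < n)%nat -> v j = M * sqrt (d j)).
  { intros j Hj. specialize (Hall j Hj). unfold w in Hall. pose proof (Hsd j Hj). rewrite <- Hall. field. lra. }
  assert (HS : 0 < sumR n d).
  { apply (Rlt_le_trans _ (d 0%nat)). apply Hd; lia. apply sumR_term. intros k Hk; pose proof (Hd k Hk); lra. lia. }
  assert (HM2 : M ^ 2 * sumR n d = 1).
  { rewrite <- Hunit, <- sumR_scal. apply sumR_ext. intros j Hj. rewrite Hv by auto.
    rewrite Rpow_mult_distr, pow2_sqrt by (pose proof (Hd j Hj); lra). reflexivity. }
  assert (HMS : M * sqrt (sumR n d) = 1).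
  { assert (0 < sqrt (sumR n d)) by (apply sqrt_lt_R0; auto).
    assert ((M * sqrt (sumR n d))^2 = 1). { rewrite Rpow_mult_distr. rewrite pow2_sqrt by lra. lra. }
    assert (0 < M * sqrt (sumR n d)) by (apply Rmult_lt_0_compat; auto).
    set (t := M * sqrt (sumR n d)) in *. assert ((t - 1) * (t + 1) = 0) by nra.
    apply Rmult_integral in H4. destruct H4; lra. }
  intros i Hi. rewrite Hv by auto. fold d.
  assert (0 < sqrt (sumR n d)) by (apply sqrt_lt_R0; auto).
  assert (HMinv : M = / sqrt (sumR n d)). { apply (Rmult_eq_reg_r (sqrt (sumR n d))); [|lra]. rewrite HMS, Rinv_l; lra. }
  rewrite HMinv. field. lra.
Qed.

Lemma sq_dev n f k : (1 <= n)%nat ->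
  sumR n (fun i => (f i - k)^2) =
  (sumR n (fun i => f i ^2) - (sumR n f)^2 / INR n) + INR n * (sumR n f / INR n - k)^2.
Proof.
  intros Hn. assert (0 < INR n) by (apply lt_0_INR; lia).
  rewrite (sumR_ext n _ (fun i => f i ^2 + ((-2 * k) * f i + k^2))) by (intros; ring).
  rewrite !sumR_plus, sumR_scal, sumR_const. field. lra.
Qed.

Lemma r_bounds b x : 0 <= b -> b ^ 2 = 1 + x -> 0 <= 1 + x / 2 - b <= x ^ 2 / 2.
Proof.
  intros Hb Hbx. assert (Hx : -1 <= x) by nra.
  assert (Hprod : (1 + x / 2 - b) * (1 + x / 2 + b) = x^2 / 4) by nra.
  assert (Hpos : 1/2 <= 1 + x / 2 + b) by lra.
  assert (0 <= x^2) by nra.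
  split; nra.
Qed.

Lemma B_bounds n k u r t : (1 <= n)%nat -> 0 < t -> sumR n u = 0 ->
  let f := fun i => k + u i - r i in
  let B := sumR n (fun i => f i ^2) - (sumR n f)^2 / INR n in
  (1 - t) * sumR n (fun i => u i ^2) - sumR n (fun i => r i ^2) / t <= B /\
  B <= (1 + t) * sumR n (fun i => u i ^2) + (1 + 1 / t) * sumR n (fun i => r i ^2).
Proof.
  intros Hn Ht Hu f B. assert (0 < INR n) by (apply lt_0_INR; lia).
  split.
  - set (rb := sumR n r / INR n).
    assert (HB : B = sumR n (fun i => (u i - (r i - rb))^2)).
    { rewrite (sumR_ext n (fun i => (u i - (r i - rb))^2) (fun i => (f i - (k - rb))^2)) by (intros; unfold f; ring).
      rewrite sq_dev by auto. unfold B.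
      assert (sumR n f / INR n - (k - rb) = 0).
      { unfold f. rewrite sumR_minus, sumR_plus, sumR_const, Hu. unfold rb. field. lra. }
      rewrite H0. ring. }
    assert (Hv : sumR n (fun i => (r i - rb)^2) <= sumR n (fun i => r i ^2)).
    { rewrite sq_dev by auto. unfold rb.
      rewrite (sumR_ext n (fun i => r i ^2) (fun i => (r i - 0)^2)) at 2 by (intros; ring).
      rewrite sq_dev by auto. assert (0 <= INR n * (sumR n r / INR n - sumR n r / INR n) ^ 2) by (apply Rmult_le_pos; [lra| apply pow2_ge_0]).
      assert (0 <= INR n * (sumR n r / INR n - 0) ^ 2) by (apply Rmult_le_pos; [lra| apply pow2_ge_0]).
      replace (sumR n r / INR n - sumR n r / INR n) with 0 by ring. simpl. lra. }
    rewrite HB.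
    assert (sumR n (fun i => (1 - t) * u i ^2 - (r i - rb)^2 / t) <= sumR n (fun i => (u i - (r i - rb))^2)).
    { apply sumR_le. intros i Hi. set (a := u i). set (c := r i - rb).
      assert (t * ((a - c)^2 - ((1 - t) * a^2 - c^2 / t)) = (t * a - c)^2 + t * c^2) by (field; lra).
      assert (0 <= (t * a - c)^2) by apply pow2_ge_0. assert (0 <= t * c^2) by (apply Rmult_le_pos; [lra|apply pow2_ge_0]).
      assert (0 <= (a - c)^2 - ((1 - t) * a^2 - c^2 / t)) by (apply (Rmult_le_reg_l t); lra).
      lra. }
    rewrite sumR_minus, sumR_scal in H0.
    rewrite (sumR_ext n (fun i => (r i - rb)^2 / t) (fun i => / t * (r i - rb)^2)) in H0 by (intros; field; lra).
    rewrite sumR_scal in H0.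
    assert (/ t * sumR n (fun i => (r i - rb) ^ 2) <= / t * sumR n (fun i => r i ^2)).
    { apply Rmult_le_compat_l. apply Rlt_le, Rinv_0_lt_compat; auto. auto. }
    unfold Rdiv. lra.
  - assert (HB : B <= sumR n (fun i => (f i - k)^2)).
    { rewrite sq_dev by auto. unfold B. assert (0 <= INR n * (sumR n f / INR n - k) ^ 2) by (apply Rmult_le_pos; [lra| apply pow2_ge_0]). lra. }
    assert (sumR n (fun i => (f i - k)^2) <= sumR n (fun i => (1 + t) * u i ^2 + (1 + 1 / t) * r i ^2)).
    { apply sumR_le. intros i Hi. unfold f. set (a := u i). set (c := r i).
      assert (t * ((1 + t) * a ^ 2 + (1 + 1 / t) * c ^ 2 - (k + a - c - k)^2) = (t * a + c)^2) by (field; lra).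
      assert (0 <= (t * a + c)^2) by apply pow2_ge_0.
      assert (0 <= (1 + t) * a ^ 2 + (1 + 1 / t) * c ^ 2 - (k + a - c - k)^2) by (apply (Rmult_le_reg_l t); lra).
      lra. }
    rewrite sumR_plus, !sumR_scal in H0. lra.
Qed.

Lemma abs_le_inv x a : Rabs x <= a -> - a <= x <= a.
Proof. unfold Rabs; destruct (Rcase_abs x); lra. Qed.
Lemma abs_le_intro x a : - a <= x <= a -> Rabs x <= a.
Proof. unfold Rabs; destruct (Rcase_abs x); lra. Qed.

Lemma final_ineq N W B e h t : 2 <= N -> 0 < W -> 0 < t <= 1/20 -> h = / N -> h <= t^2 -> Rabs e <= t^2 ->
  (1 - 3 * t) * W <= B -> B <= (1 + 3 * t) * W ->
  Rabs (B / (N * (1 + e)) - W * (N - 1) / N^2) <= 6 * t * (W * (N - 1) / N^2).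
Proof.
  intros HN HW Ht Hh Hht He HB1 HB2.
  assert (Ht2 : 0 < t^2 <= t / 20) by (split; nra).
  assert (He2 : - t^2 <= e <= t^2) by (apply abs_le_inv in He; lra).
  assert (HNe : 0 < N * (1 + e)) by nra.
  assert (HY : W * (N - 1) / N^2 = W * (1 - h) / N) by (subst h; field; lra).
  rewrite HY.
  assert (Hh0 : 0 < h) by (subst h; apply Rinv_0_lt_compat; lra).
  assert (Hc1 : (1 - h) * (1 + e) >= 1 - 2 * t^2) by nra.
  assert (Hc2 : (1 - h) * (1 + e) <= 1 + t^2) by nra.
  assert (Hup : B <= (1 + 6 * t) * ((1 - h) * (1 + e)) * W).
  { assert ((1 + 3 * t) <= (1 + 6 * t) * (1 - 2 * t^2)) by nra.
    assert ((1 + 6 * t) * (1 - 2 * t^2) * W <= (1 + 6 * t) * ((1 - h) * (1 + e)) * W).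
    { apply Rmult_le_compat_r; [lra|]. apply Rmult_le_compat_l; lra. }
    nra. }
  assert (Hlo : (1 - 6 * t) * ((1 - h) * (1 + e)) * W <= B).
  { assert ((1 - 6 * t) * (1 + t^2) <= 1 - 3 * t) by nra.
    assert ((1 - 6 * t) * ((1 - h) * (1 + e)) * W <= (1 - 6 * t) * (1 + t^2) * W).
    { apply Rmult_le_compat_r; [lra|]. apply Rmult_le_compat_l; lra. }
    nra. }
  set (iv := / (N * (1 + e))).
  assert (Hiv : 0 < iv) by (apply Rinv_0_lt_compat; lra).
  assert (HX : B / (N * (1 + e)) - W * (1 - h) / N = (B - (1 - h) * (1 + e) * W) * iv) by (unfold iv; field; lra).
  assert (HZ : 6 * t * (W * (1 - h) / N) = (6 * t * ((1 - h) * (1 + e)) * W) * iv) by (unfold iv; field; lra).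
  rewrite HX, HZ. apply abs_le_intro. split.
  - rewrite Ropp_mult_distr_l. apply Rmult_le_compat_r; lra.
  - apply Rmult_le_compat_r; lra.
Qed.

Lemma det_main n mu t (d : nat -> R) : (2 <= n)%nat -> 0 < mu -> 0 < t <= 1/20 -> (forall i, (i < n)%nat -> 0 <= d i) ->
  0 < sumR n (fun i => (d i - mu)^2) ->
  (sumR n (fun i => d i - mu))^2 <= t^2 * INR n * sumR n (fun i => (d i - mu)^2) ->
  (sumR n (fun i => d i - mu))^2 <= t^4 * INR n^2 * mu^2 ->
  sumR n (fun i => (d i - mu)^4) <= t^2 * mu^2 * sumR n (fun i => (d i - mu)^2) ->
  1 <= t^2 * INR n ->
  Rabs ((1 - (sumR n (fun i => sqrt (d i)))^2 / (INR n * sumR n d)) - (INR n - 1) * sumR n (fun i => (d i - mu)^2) / (4 * INR n^2 * mu^2))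
    <= 6 * t * ((INR n - 1) * sumR n (fun i => (d i - mu)^2) / (4 * INR n^2 * mu^2)).
Proof.
  intros Hn Hmu Ht Hd HQ2 HD1 HD2 HQ4 Htn.
  set (N := INR n) in *. assert (HN : 2 <= N) by (unfold N; apply (le_INR 2); auto).
  set (Q2 := sumR n (fun i => (d i - mu)^2)) in *. set (D := sumR n (fun i => d i - mu)) in *.
  set (Q4 := sumR n (fun i => (d i - mu)^4)) in *.
  set (S := sumR n d). set (A := sumR n (fun i => sqrt (d i))).
  set (x := fun i => (d i - mu) / mu). set (xb := D / (N * mu)).
  set (b := fun i => sqrt (d i) / sqrt mu).
  set (r := fun i => 1 + x i / 2 - b i). set (u := fun i => x i / 2 - xb / 2). set (k := 1 + xb / 2).
  assert (Hsmu : 0 < sqrt mu) by (apply sqrt_lt_R0; auto).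
  assert (Hb2 : forall i, (i < n)%nat -> b i ^2 = 1 + x i).
  { intros i Hi. unfold b, x. unfold Rdiv. rewrite Rpow_mult_distr, pow2_sqrt by auto.
    rewrite <- Rinv_pow by lra. rewrite pow2_sqrt by lra. field. lra. }
  assert (Hb0 : forall i, (i < n)%nat -> 0 <= b i).
  { intros i Hi. unfold b. unfold Rdiv. apply Rmult_le_pos. apply sqrt_pos. apply Rlt_le, Rinv_0_lt_compat; auto. }
  assert (Hr : forall i, (i < n)%nat -> 0 <= r i <= x i ^2 / 2) by (intros; unfold r; apply r_bounds; auto).
  assert (Hsx : sumR n x = D / mu).
  { unfold x, D. rewrite (sumR_ext n _ (fun i => / mu * (d i - mu))) by (intros; field; lra). rewrite sumR_scal. field. lra. }
  assert (Hu0 : sumR n u = 0).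
  { unfold u. rewrite sumR_minus, (sumR_ext n (fun i => x i / 2) (fun i => /2 * x i)) by (intros; field).
    rewrite sumR_scal, sumR_const, Hsx. fold N. unfold xb. field. split; lra. }
  assert (Ht0 : 0 < t) by lra.
  destruct (B_bounds n k u r t ltac:(lia) Ht0 Hu0) as [HBlo HBhi].
  set (B := sumR n (fun i => b i ^2) - (sumR n b)^2 / N).
  assert (HBe : sumR n (fun i => (k + u i - r i)^2) - (sumR n (fun i => k + u i - r i))^2 / INR n = B).
  { unfold B, N. rewrite (sumR_ext n (fun i => (k + u i - r i)^2) (fun i => b i ^2)) by (intros; unfold k, u, r; ring).
    rewrite (sumR_ext n (fun i => k + u i - r i) b) by (intros; unfold k, u, r; ring). reflexivity. }
  rewrite HBe in HBlo, HBhi.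
  assert (HU : sumR n (fun i => u i ^2) = (Q2 - D^2 / N) / (4 * mu^2)).
  { unfold u. rewrite sq_dev by lia.
    assert (E1 : sumR n (fun i => x i / 2) = D / (2 * mu)).
    { rewrite (sumR_ext n (fun i => x i / 2) (fun i => /2 * x i)) by (intros; field). rewrite sumR_scal, Hsx. field. lra. }
    assert (E2 : sumR n (fun i => (x i / 2)^2) = Q2 / (4 * mu^2)).
    { unfold Q2. rewrite <- (Rmult_1_l (sumR n (fun i => (d i - mu)^2))).
      unfold Rdiv. rewrite Rmult_assoc, (Rmult_comm _ (/ (4 * mu^2))), <- Rmult_assoc, <- sumR_scal.
      apply sumR_ext. intros. unfold x. field. lra. }
    rewrite E1, E2. fold N. unfold xb. field. split; lra. }
  assert (HR2 : sumR n (fun i => r i ^2) <= Q4 / (4 * mu^4)).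
  { unfold Q4. unfold Rdiv. rewrite Rmult_comm, <- sumR_scal. apply sumR_le. intros i Hi.
    destruct (Hr i Hi). assert (r i ^2 <= (x i ^2 / 2)^2) by (apply pow_maj_Rabs; rewrite Rabs_right; lra).
    replace (/ (4 * mu ^ 4) * (d i - mu) ^ 4) with ((x i ^2 / 2)^2) by (unfold x; field; lra). lra. }
  set (W := Q2 / (4 * mu^2)).
  assert (HW : 0 < W) by (unfold W; apply Rdiv_lt_0_compat; nra).
  assert (HUhi : sumR n (fun i => u i ^2) <= W).
  { rewrite HU. unfold W. assert (0 <= D^2 / N) by (unfold Rdiv; apply Rmult_le_pos; [nra | apply Rlt_le, Rinv_0_lt_compat; lra]). apply Rmult_le_compat_r. 
    apply Rlt_le, Rinv_0_lt_compat; nra. lra. }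
  assert (HUlo : (1 - t^2) * W <= sumR n (fun i => u i ^2)).
  { rewrite HU. unfold W. assert (D^2 / N <= t^2 * Q2) by (apply (Rmult_le_reg_r N); [lra|]; unfold Rdiv; rewrite Rmult_assoc, Rinv_l, Rmult_1_r by lra; lra).
    unfold Rdiv. rewrite <- Rmult_assoc. apply Rmult_le_compat_r. apply Rlt_le, Rinv_0_lt_compat; nra. lra. }
  assert (HR2W : sumR n (fun i => r i ^2) <= t^2 * W).
  { eapply Rle_trans. apply HR2. unfold W. apply (Rmult_le_reg_r (4 * mu^4)). apply Rmult_lt_0_compat; [lra | apply pow_lt; lra].
    replace (Q4 / (4 * mu ^ 4) * (4 * mu ^ 4)) with Q4 by (field; lra).
    replace (t ^ 2 * (Q2 / (4 * mu ^ 2)) * (4 * mu ^ 4)) with (t^2 * mu^2 * Q2) by (field; lra). lra. }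
  assert (HR2pos : 0 <= sumR n (fun i => r i ^2)) by (apply sumR_nonneg; intros; apply pow2_ge_0).
  assert (HBup : B <= (1 + 3 * t) * W).
  { assert ((1 + 1/t) * sumR n (fun i => r i ^2) <= (1 + 1/t) * (t^2 * W)).
    { apply Rmult_le_compat_l; auto. assert (0 < 1/t) by (apply Rdiv_lt_0_compat; lra). lra. }
    replace ((1 + 1/t) * (t^2 * W)) with ((t + t^2) * W) in H by (field; lra).
    assert ((1 + t) * sumR n (fun i => u i ^2) <= (1 + t) * W) by (apply Rmult_le_compat_l; lra).
    nra. }
  assert (HBdn : (1 - 3 * t) * W <= B).
  { assert (sumR n (fun i => r i ^2) / t <= t * W).
    { apply (Rmult_le_reg_r t); [lra|]. unfold Rdiv. rewrite Rmult_assoc, Rinv_l, Rmult_1_r by lra. nra. }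
    assert ((1 - t) * ((1 - t^2) * W) <= (1 - t) * sumR n (fun i => u i ^2)) by (apply Rmult_le_compat_l; lra).
    nra. }
  assert (HS : S = N * mu + D).
  { unfold S, D. rewrite sumR_minus, sumR_const. fold N. ring. }
  set (e := D / (N * mu)).
  assert (He : Rabs e <= t^2).
  { apply abs_le_intro. assert (e^2 <= (t^2)^2).
    { assert (Hnm : 0 < (N * mu)^2) by (apply pow_lt, Rmult_lt_0_compat; lra).
      unfold e. unfold Rdiv. rewrite Rpow_mult_distr. rewrite <- Rinv_pow by (apply Rmult_integral_contrapositive_currified; lra).
      apply (Rmult_le_reg_r ((N * mu)^2)). exact Hnm. rewrite Rmult_assoc, Rinv_l, Rmult_1_r by lra.
      replace ((t^2)^2 * (N * mu)^2) with (t^4 * N^2 * mu^2) by ring. auto. }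
    assert (0 <= t^2) by nra. nra. }
  assert (He2 : - t^2 <= e <= t^2) by (apply abs_le_inv; auto).
  assert (Ht2 : t^2 <= 1/400) by nra.
  assert (HNmu : 0 < N * mu) by (apply Rmult_lt_0_compat; lra).
  assert (HSpos : 0 < S) by (rewrite HS; assert (D = e * (N * mu)) by (unfold e; field; split; lra); rewrite H; nra).
  assert (HX : 1 - A^2 / (N * S) = B / (N * (1 + e))).
  { assert (Hsb2 : sumR n (fun i => b i ^2) = S / mu).
    { unfold S. rewrite (sumR_ext n _ (fun i => / mu * d i)). rewrite sumR_scal. field. lra.
      intros i Hi. unfold b. unfold Rdiv. rewrite Rpow_mult_distr, pow2_sqrt by auto.
      rewrite <- Rinv_pow by lra. rewrite pow2_sqrt by lra. field. lra. }
    assert (Hsb : sumR n b = A / sqrt mu).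
    { unfold A, b. unfold Rdiv. rewrite (sumR_ext n _ (fun i => / sqrt mu * sqrt (d i))) by (intros; ring). rewrite sumR_scal. ring. }
    unfold B. rewrite Hsb2, Hsb.
    replace (1 + e) with (S / (N * mu)) by (rewrite HS; unfold e; field; lra).
    unfold Rdiv. rewrite Rpow_mult_distr, <- Rinv_pow by lra. rewrite pow2_sqrt by lra. field. repeat split; lra. }
  fold N. rewrite HX.
  replace ((N - 1) * Q2 / (4 * N ^ 2 * mu ^ 2)) with (W * (N - 1) / N^2) by (unfold W; field; lra).
  apply final_ineq with (h := / N); auto.
  apply (Rmult_le_reg_r N); [lra|]. rewrite Rinv_l by lra. lra.
Qed.

Lemma rtil_formula n (d v : nat -> R) : (1 <= n)%nat -> (forall i, (i < n)%nat -> 0 <= d i) ->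
  0 < sumR n d -> (forall i, (i < n)%nat -> v i = sqrt (d i) / sqrt (sumR n d)) ->
  rtil_sq n v = 1 - (sumR n (fun i => sqrt (d i)))^2 / (INR n * sumR n d).
Proof.
  intros Hn Hd HS Hv. unfold rtil_sq.
  set (S := sumR n d) in *. set (A := sumR n (fun i => sqrt (d i))).
  assert (HN : 0 < INR n) by (apply lt_0_INR; lia).
  set (N := INR n) in *.
  assert (Hsn : 0 < sqrt N) by (apply sqrt_lt_R0; auto).
  assert (HsS : 0 < sqrt S) by (apply sqrt_lt_R0; auto).
  assert (Hsn2 : sqrt N * sqrt N = N) by (apply sqrt_sqrt; lra).
  assert (HsS2 : sqrt S * sqrt S = S) by (apply sqrt_sqrt; lra).
  set (sn := sqrt N) in *. set (sS := sqrt S) in *.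
  assert (Hc : sumR n (fun i => / sn * v i) = A / (sn * sS)).
  { rewrite (sumR_ext n _ (fun i => / (sn * sS) * sqrt (d i))) by (intros; rewrite Hv by auto; field; lra).
    rewrite sumR_scal. unfold A. field. lra. }
  rewrite Hc. set (c := A / (sn * sS)).
  rewrite (sumR_ext n _ (fun i => / (sn * sn) + ((-2 * c / (sn * sS)) * sqrt (d i) + (c^2 / (sS * sS)) * d i))).
  2:{ intros i Hi. rewrite Hv by auto. assert (sqrt (d i) * sqrt (d i) = d i) by (apply sqrt_sqrt; apply Hd; auto).
      set (sd := sqrt (d i)) in *. rewrite <- H. field. lra. }
  rewrite !sumR_plus, !sumR_scal, sumR_const. fold A. fold S.
  change (INR n) with N. rewrite Hsn2, HsS2. unfold c. rewrite <- Hsn2, <- HsS2. field. split; lra.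
Qed.

Lemma Rltb_true a b : Rltb a b = true <-> a < b.
Proof. unfold Rltb. destruct (Rlt_dec a b); split; intros; auto; discriminate. Qed.
Lemma Rltb_false a b : Rltb a b = false <-> b <= a.
Proof. unfold Rltb. destruct (Rlt_dec a b); split; intros; try discriminate; try lra; auto. Qed.

Definition bad2 n p g := Rltb (Q2 n p g) (INR n * ((INR n - 1) * p) * (1 - p) / 2).
Definition bad3 n p t g := Rltb (t^2 * INR n * (INR n * ((INR n - 1) * p) * (1 - p)) / 2) (Dsum n p g ^2).
Definition bad4 n p t g := Rltb (t^2 * ((INR n - 1) * p)^2 * (INR n * ((INR n - 1) * p) * (1 - p)) / 2) (Q4 n p g).

Lemma det_combine n p t eps v g : (2 <= n)%nat -> 0 < p < 1 -> 0 < t <= 1/20 -> 6 * t <= eps ->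
  (1 - p) / 2 <= t^2 * ((INR n - 1) * p) -> 1 <= t^2 * INR n ->
  B1 n g = false -> bad2 n p g = false -> bad3 n p t g = false -> bad4 n p t g = false ->
  principal_unit_nonneg_eigvec n (nadj n g) v ->
  deviates eps (rtil_sq n v) (rhs n p g) = false.
Proof.
  intros Hn Hp Ht Heps Hq Htn HB1 HB2 HB3 HB4 Hv.
  unfold bad2, bad3, bad4 in *. rewrite Rltb_false in HB2, HB3, HB4.
  set (N := INR n) in *. assert (HN : 2 <= N) by (unfold N; apply (le_INR 2); auto).
  set (mu := (N - 1) * p) in *. assert (Hmu : 0 < mu) by (unfold mu; nra).
  set (m := N * mu * (1 - p)) in *. assert (Hm : 0 < m) by (unfold m; apply Rmult_lt_0_compat; [nra|lra]).
  set (d := deg n g).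
  assert (Hd : forall i, (i < n)%nat -> 0 < d i) by (intros; apply deg_pos_conn; auto).
  assert (HS : 0 < sumR n d). { apply (Rlt_le_trans _ (d 0%nat)). apply Hd; lia. apply sumR_term. intros k Hk; pose proof (Hd k Hk); lra. lia. }
  assert (Hform := eigvec_form n g v Hn HB1 Hv). fold d in Hform.
  rewrite (rtil_formula n d v) by (auto; try lia; intros; pose proof (Hd i H); lra).
  assert (HQ2 : Q2 n p g = sumR n (fun i => (d i - mu)^2)) by reflexivity.
  assert (HD : Dsum n p g = sumR n (fun i => d i - mu)) by reflexivity.
  assert (HQ4 : Q4 n p g = sumR n (fun i => (d i - mu)^4)) by reflexivity.
  rewrite HQ2, HD, HQ4 in *.
  assert (Hrhs : rhs n p g = (N - 1) * sumR n (fun i => (d i - mu)^2) / (4 * N^2 * mu^2)).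
  { unfold rhs. fold N. fold d. rewrite (sumR_ext n _ (fun i => / N * (d i - mu)^2)) by (intros; unfold mu; field; lra).
    rewrite sumR_scal. unfold mu. field. split; [lra|]. split; lra. }
  rewrite Hrhs.
  assert (Hdm := det_main n mu t d Hn Hmu Ht (fun i Hi => Rlt_le _ _ (Hd i Hi))).
  fold N in Hdm.
  assert (Hmain : Rabs ((1 - (sumR n (fun i => sqrt (d i)))^2 / (N * sumR n d)) - (N - 1) * sumR n (fun i => (d i - mu)^2) / (4 * N^2 * mu^2))
    <= 6 * t * ((N - 1) * sumR n (fun i => (d i - mu)^2) / (4 * N^2 * mu^2))).
  { apply Hdm.
    - lra.
    - assert (t^2 * N * (m / 2) <= t^2 * N * sumR n (fun i => (d i - mu)^2)).
      { apply Rmult_le_compat_l. nra. lra. }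
      lra.
    - assert (t ^ 2 * N * m / 2 <= t^4 * N^2 * mu^2).
      { unfold m. replace (t ^ 2 * N * (N * mu * (1 - p)) / 2) with ((t^2 * N * N * mu) * ((1 - p) / 2)) by field.
        replace (t ^ 4 * N ^ 2 * mu ^ 2) with ((t^2 * N * N * mu) * (t^2 * mu)) by field.
        apply Rmult_le_compat_l; auto. assert (0 < t^2) by nra. assert (0 < t^2 * N * N * mu) by (repeat apply Rmult_lt_0_compat; lra). lra. }
      lra.
    - assert (t^2 * mu^2 * (m / 2) <= t^2 * mu^2 * sumR n (fun i => (d i - mu)^2)).
      { apply Rmult_le_compat_l. nra. lra. }
      lra.
    - auto. }
  assert (HY : 0 < (N - 1) * sumR n (fun i => (d i - mu)^2) / (4 * N^2 * mu^2)).
  { apply Rdiv_lt_0_compat. apply Rmult_lt_0_compat; lra. apply Rmult_lt_0_compat; [apply Rmult_lt_0_compat; [lra | apply pow_lt; lra] | apply pow_lt; lra]. }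
  unfold deviates. apply Rltb_false. rewrite (Rabs_right ((N - 1) * _ / _)) by lra.
  eapply Rle_trans. apply Hmain. apply Rmult_le_compat_r; lra.
Qed.

Lemma E_markov p k f (ev : list bool -> bool) a : 0 <= p <= 1 -> 0 < a ->
  (forall g, length g = k -> ind (ev g) <= f g / a) -> E p k (fun g => ind (ev g)) <= E p k f / a.
Proof.
  intros Hp Ha H. eapply Rle_trans. apply E_mono; [auto|]. apply H.
  rewrite (E_ext p k (fun g => f g / a) (fun g => / a * f g)) by (intros; unfold Rdiv; ring).
  rewrite E_scal. unfold Rdiv. lra.
Qed.

Lemma Rdiv_mul_id x a : a <> 0 -> x / a * a = x.
Proof. intros; field; auto. Qed.

Lemma prob_bound n p t eps (v : list bool -> nat -> R) :
  (2 <= n)%nat -> 0 < p < 1 -> 0 < t <= 1/20 -> 6 * t <= eps ->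
  1 <= (INR n - 1) * p -> (1 - p) / 2 <= t^2 * ((INR n - 1) * p) -> 1 <= t^2 * INR n ->
  INR n * sqrt (1 - p) ^ n <= / INR n ->
  (forall g, In g (graphs n) -> (forall i, (i < n)%nat -> 0 < deg n g i) -> principal_unit_nonneg_eigvec n (nadj n g) (v g)) ->
  prob n p (fun g => deviates eps (rtil_sq n (v g)) (rhs n p g)) <=
    4 / INR n + 32 / INR n + 8 / ((1 - p) * ((INR n - 1) * p)) + 4 / (t^2 * INR n)
    + 24 / (t^2 * ((INR n - 1) * p)) + 4 / (t^2 * ((INR n - 1) * p)^2).
Proof.
  intros Hn Hp Ht Heps Hmu1 Hq Htn Hr Hv.
  assert (Hp01 : 0 <= p <= 1) by lra.
  set (N := INR n) in *. assert (HN : 2 <= N) by (unfold N; apply (le_INR 2); auto).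
  set (mu := (N - 1) * p) in *. set (q := 1 - p) in *. assert (Hq0 : 0 < q) by (unfold q; lra).
  set (s := p * q). assert (Hs : 0 < s) by (unfold s; nra).
  set (m := N * mu * q).
  assert (Hm : 0 < m) by (unfold m; apply Rmult_lt_0_compat; [nra|lra]).
  assert (Hmeq : m = N * (N - 1) * s) by (unfold m, mu, s; ring).
  rewrite prob_E.
  assert (Hpt : forall g, length g = length (pairs n) ->
     ind (deviates eps (rtil_sq n (v g)) (rhs n p g)) <=
     ind (B1 n g) + ind (bad2 n p g) + ind (bad3 n p t g) + ind (bad4 n p t g)).
  { intros g Hg.
    pose proof (ind_01 (B1 n g)). pose proof (ind_01 (bad2 n p g)). pose proof (ind_01 (bad3 n p t g)).
    pose proof (ind_01 (bad4 n p t g)). pose proof (ind_01 (deviates eps (rtil_sq n (v g)) (rhs n p g))).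
    destruct (B1 n g) eqn:E1; [simpl in *; lra|].
    destruct (bad2 n p g) eqn:E2; [simpl in *; lra|].
    destruct (bad3 n p t g) eqn:E3; [simpl in *; lra|].
    destruct (bad4 n p t g) eqn:E4; [simpl in *; lra|].
    rewrite (det_combine n p t eps (v g) g); auto. simpl. lra.
    apply Hv. apply bitlists_complete; auto. intros i Hi. apply deg_pos_conn; auto. }
  eapply Rle_trans. apply E_mono; [auto|]. apply Hpt.
  rewrite !E_plus.
  assert (H1 : E p (length (pairs n)) (fun g => ind (B1 n g)) <= 4 / N).
  { eapply Rle_trans. apply PB1; auto. fold q.
    assert (Hr0 : 0 <= sqrt q ^ n) by (apply pow_le, sqrt_pos).
    assert (HNi : / N <= 1/2). { assert (/ N <= / 2) by (apply Rinv_le_contravar; lra). lra. }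
    assert (Hr2 : N * sqrt q ^ n <= 1/2) by lra.
    pose proof (binom_small (sqrt q ^ n) n Hr0 Hr2) as Hbs. fold N in Hbs.
    assert (2 * (2 * N * sqrt q ^ n) <= 4 / N). { unfold Rdiv. lra. }
    lra. }
  assert (H2 : E p (length (pairs n)) (fun g => ind (bad2 n p g)) <= 32 / N + 8 / (q * mu)).
  { eapply Rle_trans. apply (E_markov p _ (fun g => 4 * (Q2 n p g - m)^2) _ (m^2)); auto. apply pow_lt; auto.
    - intros g _. unfold bad2. fold N mu q m. destruct (Rltb (Q2 n p g) (m / 2)) eqn:E.
      + apply Rltb_true in E. change (ind true) with 1. apply (Rmult_le_reg_r (m^2)). apply pow_lt; auto.
        unfold Rdiv. rewrite Rmult_assoc, Rinv_l, Rmult_1_r by (apply pow_nonzero; lra). nra.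
      + change (ind false) with 0. unfold Rdiv. apply Rmult_le_pos. apply Rmult_le_pos; [lra | apply pow2_ge_0].
        apply Rlt_le, Rinv_0_lt_compat, pow_lt; auto.
    - rewrite (E_ext p _ _ (fun g => 4 * Q2 n p g ^2 + ((-8 * m) * Q2 n p g + 4 * m^2))) by (intros; ring).
      rewrite !E_plus, !E_scal, E_const, GQ2. fold N q. pose proof (GQ2sq p n Hp01). fold N q in H. fold s in H.
      replace (N * (N - 1) * s) with m in H by (rewrite Hmeq; reflexivity).
      replace (N * (N - 1) * (p * q)) with m by (rewrite Hmeq; unfold s; ring).
      assert (Hb : (4 * E p (length (pairs n)) (fun x : list bool => Q2 n p x ^ 2) + (-8 * m * m + 4 * m ^ 2)) / m^2
               <= 4 * (2 * N^3 * s^2 + 2 * N^2 * s) / m^2).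
      { apply Rmult_le_compat_r. apply Rlt_le, Rinv_0_lt_compat, pow_lt; auto. lra. }
      eapply Rle_trans. apply Hb.
      replace (4 * (2 * N ^ 3 * s ^ 2 + 2 * N ^ 2 * s) / m ^ 2) with (8 * N / (N - 1)^2 + 8 / ((N - 1) * (q * mu)))
        by (rewrite Hmeq; unfold mu, s; field; repeat split; lra).
      assert (8 * N / (N - 1)^2 <= 32 / N).
      { apply (Rmult_le_reg_r (N * (N - 1)^2)). apply Rmult_lt_0_compat; [lra | apply pow_lt; lra].
        replace (8 * N / (N - 1) ^ 2 * (N * (N - 1) ^ 2)) with (8 * N * N) by (field; lra).
        replace (32 / N * (N * (N - 1) ^ 2)) with (32 * (N - 1)^2) by (field; lra). nra. }
      assert (8 / ((N - 1) * (q * mu)) <= 8 / (q * mu)).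
      { assert (0 < q * mu) by (apply Rmult_lt_0_compat; lra).
        unfold Rdiv. apply Rmult_le_compat_l; [lra|]. apply Rinv_le_contravar. lra. nra. }
      lra. }
  assert (H3 : E p (length (pairs n)) (fun g => ind (bad3 n p t g)) <= 4 / (t^2 * N)).
  { assert (Ht2 : 0 < t^2) by nra.
    eapply Rle_trans. apply (E_markov p _ (fun g => Dsum n p g ^2) _ (t^2 * N * m / 2)); auto.
    apply Rdiv_lt_0_compat; [repeat apply Rmult_lt_0_compat; lra | lra].
    - intros g _. unfold bad3. fold N mu q m. destruct (Rltb _ _) eqn:E.
      + apply Rltb_true in E. change (ind true) with 1. apply (Rmult_le_reg_r (t^2 * N * m / 2)).
        apply Rdiv_lt_0_compat; [repeat apply Rmult_lt_0_compat; lra | lra].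
        rewrite Rdiv_mul_id. lra. apply Rgt_not_eq, Rdiv_lt_0_compat; [repeat apply Rmult_lt_0_compat; lra | lra].
      + change (ind false) with 0. unfold Rdiv. apply Rmult_le_pos. apply pow2_ge_0. apply Rlt_le, Rinv_0_lt_compat.
        apply Rdiv_lt_0_compat; [repeat apply Rmult_lt_0_compat; lra | lra].
    - rewrite GD2. fold N q. rewrite Hmeq. unfold s. right. field. repeat split; try lra. }
  assert (H4 : E p (length (pairs n)) (fun g => ind (bad4 n p t g)) <= 24 / (t^2 * mu) + 4 / (t^2 * mu^2)).
  { assert (Ht2 : 0 < t^2) by nra. assert (Hmu : 0 < mu) by lra.
    assert (Ha : 0 < t^2 * mu^2 * m / 2) by (apply Rdiv_lt_0_compat; [repeat apply Rmult_lt_0_compat; try lra; apply pow_lt; lra | lra]).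
    eapply Rle_trans. apply (E_markov p _ (Q4 n p) _ (t^2 * mu^2 * m / 2)); auto.
    - intros g _. unfold bad4. fold N mu q m. destruct (Rltb _ _) eqn:E.
      + apply Rltb_true in E. change (ind true) with 1. apply (Rmult_le_reg_r (t^2 * mu^2 * m / 2)); auto.
        rewrite Rdiv_mul_id by (apply Rgt_not_eq; exact Ha). lra.
      + change (ind false) with 0. unfold Rdiv. apply Rmult_le_pos.
        unfold Q4. apply sumR_nonneg. intros. replace (dbar n p g i ^4) with ((dbar n p g i ^2)^2) by ring. apply pow2_ge_0.
        apply Rlt_le, Rinv_0_lt_compat. auto.
    - pose proof (GQ4 p n Hp01) as HG. fold N q in HG. fold s in HG.
      assert (Hb : E p (length (pairs n)) (Q4 n p) / (t ^ 2 * mu ^ 2 * m / 2) <= (3 * N ^ 3 * s ^ 2 + N ^ 2 * s) / (t ^ 2 * mu ^ 2 * m / 2)).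
      { apply Rmult_le_compat_r. apply Rlt_le, Rinv_0_lt_compat; auto. auto. }
      eapply Rle_trans. apply Hb.
      replace ((3 * N ^ 3 * s ^ 2 + N ^ 2 * s) / (t ^ 2 * mu ^ 2 * m / 2)) with
        (6 * (N / (N - 1))^2 * q / (t^2 * mu) + 2 * (N / (N - 1)) / (t^2 * mu^2))
        by (unfold m, s, mu; field; repeat split; try lra; nra).
      assert (HNN : 1 <= N / (N - 1) <= 2).
      { split; apply (Rmult_le_reg_r (N - 1)); try lra; unfold Rdiv; rewrite Rmult_assoc, Rinv_l, Rmult_1_r by lra; lra. }
      assert (6 * (N / (N - 1))^2 * q / (t^2 * mu) <= 24 / (t^2 * mu)).
      { unfold Rdiv. apply Rmult_le_compat_r. apply Rlt_le, Rinv_0_lt_compat, Rmult_lt_0_compat; lra.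
        assert ((N / (N - 1))^2 <= 4) by nra. assert (q <= 1) by (unfold q; lra). nra. }
      assert (2 * (N / (N - 1)) / (t^2 * mu^2) <= 4 / (t^2 * mu^2)).
      { unfold Rdiv. apply Rmult_le_compat_r. apply Rlt_le, Rinv_0_lt_compat. apply Rmult_lt_0_compat; [lra | apply pow_lt; lra].
        lra. }
      lra. }
  replace (8 / ((1 - p) * mu)) with (8 / (q * mu)) by reflexivity.
  lra.
Qed.

Lemma exp_pow_n a n : exp a ^ n = exp (INR n * a).
Proof.
  induction n. simpl. rewrite Rmult_0_l, exp_0. reflexivity.
  rewrite S_INR. simpl. rewrite IHn, <- exp_plus. f_equal. ring.
Qed.

Lemma sqrt_le_exp p : 0 <= p <= 1 -> sqrt (1 - p) <= exp (- p / 2).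
Proof.
  intros Hp. assert (exp (- p / 2) ^ 2 = exp (- p)) by (rewrite exp_pow_n; f_equal; simpl; field).
  rewrite <- (sqrt_pow2 (exp (- p / 2))) by (apply Rlt_le, exp_pos).
  apply sqrt_le_1_alt. rewrite H. pose proof (exp_ineq1_le (- p)). lra.
Qed.

Lemma ln_ge1 x : 3 <= x -> 1 <= ln x.
Proof.
  intros Hx. pose proof exp_le_3. destruct (Rle_lt_or_eq_dec (exp 1) x) as [H1|H1]; [lra| |].
  - pose proof (ln_increasing (exp 1) x (exp_pos 1) H1). rewrite ln_exp in H0. lra.
  - rewrite <- H1, ln_exp. lra.
Qed.

Lemma prob_nonneg n p ev : 0 <= p <= 1 -> 0 <= prob n p ev.
Proof.
  intros Hp. rewrite prob_E. rewrite <- (E_const p (length (pairs n)) 0).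
  apply E_mono; auto. intros. pose proof (ind_01 (ev x)). lra.
Qed.

Lemma abs_le_inv' x a : Rabs x < a -> x < a.
Proof. unfold Rabs; destruct (Rcase_abs x); lra. Qed.

Lemma sparse_eventually (p : nat -> R) K : (forall n, 0 < p n <= 1) ->
  Un_cv (fun n => ln (INR n) / (INR n * p n)) 0 -> 0 < K ->
  exists N, forall n, (N <= n)%nat -> K * ln (INR n) < INR n * p n.
Proof.
  intros Hp Hs HK. destruct (Hs (/ K)) as [N0 HN0]. apply Rinv_0_lt_compat; auto.
  exists (max N0 1). intros n Hn. specialize (HN0 n ltac:(lia)). unfold R_dist in HN0.
  rewrite Rminus_0_r in HN0. apply abs_le_inv' in HN0.
  assert (Hn1 : 1 <= INR n) by (apply (le_INR 1); lia).
  assert (Hnp : 0 < INR n * p n) by (apply Rmult_lt_0_compat; [lra | apply Hp]).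
  assert (ln (INR n) < / K * (INR n * p n)).
  { apply (Rmult_lt_reg_r (/ (INR n * p n))). apply Rinv_0_lt_compat; auto.
    rewrite Rmult_assoc, Rinv_r, Rmult_1_r by lra. exact HN0. }
  apply (Rmult_lt_reg_l (/ K)). apply Rinv_0_lt_compat; auto.
  rewrite <- Rmult_assoc, Rinv_l, Rmult_1_l by lra. exact H.
Qed.

Theorem lemma4p3 (p : nat -> R) (ut : nat -> list bool -> nat -> R)
  (Hp : forall n, 0 < p n <= 1)
  (Hsparse : Un_cv (fun n => ln (INR n) / (INR n * p n)) 0)
  (Hdense : exists c, c < 1 /\ exists N, forall n, (N <= n)%nat -> p n <= c)
  (Hut : forall n g, In g (graphs n) -> (forall i, (i < n)%nat -> 0 < deg n g i) ->
         principal_unit_nonneg_eigvec n (nadj n g) (ut n g)) :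
  forall eps, 0 < eps ->
    Un_cv (fun n => prob n (p n)
             (fun g => deviates eps (rtil_sq n (ut n g)) (rhs n (p n) g))) 0.
Proof.
  intros eps Heps er Her.
  set (t := Rmin (eps / 6) (1 / 20)).
  assert (Ht : 0 < t <= 1/20).
  { unfold t. split. apply Rmin_glb_lt; lra. apply Rmin_r. }
  assert (Ht6 : 6 * t <= eps) by (pose proof (Rmin_l (eps/6) (1/20)); fold t in H; lra).
  assert (Ht2 : 0 < t^2) by nra.
  destruct Hdense as [c [Hc [N1 HN1]]].
  set (q0 := 1 - c). assert (Hq0 : 0 < q0) by (unfold q0; lra).
  set (C1 := 36 + 4 / t^2). set (C2 := 8 / q0 + 28 / t^2).
  assert (HC1 : 0 < C1) by (unfold C1; assert (0 < 4 / t^2) by (apply Rdiv_lt_0_compat; lra); lra).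
  assert (HC2 : 0 < C2) by (unfold C2; assert (0 < 8 / q0) by (apply Rdiv_lt_0_compat; lra);
                           assert (0 < 28 / t^2) by (apply Rdiv_lt_0_compat; lra); lra).
  set (M := Rmax 1 (Rmax (1 / (2 * t^2)) (2 * C2 / er))).
  assert (HM1 : 1 <= M) by apply Rmax_l.
  assert (HM2 : 1 / (2 * t^2) <= M) by (eapply Rle_trans; [apply Rmax_l | apply Rmax_r]).
  assert (HM3 : 2 * C2 / er <= M) by (eapply Rle_trans; [apply Rmax_r | apply Rmax_r]).
  set (K := Rmax 4 (2 * M)).
  assert (HK4 : 4 <= K) by apply Rmax_l. assert (HKM : 2 * M <= K) by apply Rmax_r.
  destruct (sparse_eventually p K Hp Hsparse ltac:(lra)) as [N2 HN2].
  destruct (INR_unbounded (Rmax (1 / t^2) (2 * C1 / er))) as [N3 HN3].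
  exists (max N1 (max N2 (max N3 3))). intros n Hn.
  unfold R_dist. rewrite Rminus_0_r.
  specialize (HN1 n ltac:(lia)). specialize (HN2 n ltac:(lia)).
  set (N := INR n) in *.
  assert (HnN3 : INR N3 <= N) by (apply le_INR; lia).
  assert (HN3a : 1 / t^2 < N) by (pose proof (Rmax_l (1 / t^2) (2 * C1 / er)); lra).
  assert (HN3b : 2 * C1 / er < N) by (pose proof (Rmax_r (1 / t^2) (2 * C1 / er)); lra).
  assert (HN3' : 3 <= N) by (unfold N; replace 3 with (INR 3) by (simpl; lra); apply le_INR; lia).
  destruct (Hp n) as [Hp0 Hp1].
  set (pn := p n) in *.
  assert (Hpn1 : pn < 1) by lra.
  assert (Hln : 1 <= ln N) by (apply ln_ge1; auto).
  assert (Hnp : K < N * pn) by nra.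
  set (mu := (N - 1) * pn).
  assert (Hmu : M < mu) by (unfold mu; nra).
  assert (Hmu1 : 1 <= mu) by lra.
  assert (Hc1 : (1 - pn) / 2 <= t^2 * mu).
  { assert (1 / 2 <= t^2 * mu).
    { apply (Rmult_le_reg_r (/ t^2)). apply Rinv_0_lt_compat; lra.
      replace (t ^ 2 * mu * / t ^ 2) with mu by (field; lra).
      replace (1 / 2 * / t ^ 2) with (1 / (2 * t^2)) by (field; lra). lra. }
    lra. }
  assert (Hc2 : 1 <= t^2 * N).
  { apply (Rmult_le_reg_r (/ t^2)). apply Rinv_0_lt_compat; lra.
    replace (t ^ 2 * N * / t ^ 2) with N by (field; lra). replace (1 * / t^2) with (1 / t^2) by (field; lra). lra. }
  assert (Hc3 : N * sqrt (1 - pn) ^ n <= / N).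
  { assert (H1 : sqrt (1 - pn) ^ n <= exp (- pn / 2) ^ n).
    { apply pow_incr. split. apply sqrt_pos. apply sqrt_le_exp. lra. }
    rewrite exp_pow_n in H1. fold N in H1.
    assert (H2 : exp (N * (- pn / 2)) <= exp (-2 * ln N)).
    { destruct (Req_dec (N * (- pn / 2)) (-2 * ln N)). rewrite H; lra.
      apply Rlt_le, exp_increasing. nra. }
    assert (H3 : exp (-2 * ln N) = / (N * N)).
    { replace (-2 * ln N) with (- (ln N + ln N)) by ring. rewrite exp_Ropp, exp_plus, exp_ln by lra. reflexivity. }
    assert (HN0 : 0 < N) by lra.
    assert (N * sqrt (1 - pn) ^ n <= N * / (N * N)) by (apply Rmult_le_compat_l; lra).
    replace (N * / (N * N)) with (/ N) in H by (field; lra). exact H. }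
  assert (Hb := prob_bound n pn t eps (ut n) ltac:(lia) ltac:(lra) Ht Ht6 ltac:(fold N; lra) ltac:(fold N; fold mu; lra) Hc2 Hc3 (Hut n)).
  fold N mu in Hb.
  assert (Hpos := prob_nonneg n pn (fun g => deviates eps (rtil_sq n (ut n g)) (rhs n pn g)) ltac:(lra)).
  rewrite Rabs_right by lra.
  eapply Rle_lt_trans. apply Hb.
  assert (HN0 : 0 < N) by lra. assert (Hmu0 : 0 < mu) by lra.
  assert (B1 : 8 / ((1 - pn) * mu) <= 8 / (q0 * mu)).
  { unfold Rdiv. apply Rmult_le_compat_l; [lra|]. apply Rinv_le_contravar. apply Rmult_lt_0_compat; lra.
    apply Rmult_le_compat_r; unfold q0; lra. }
  assert (B2 : 4 / (t^2 * mu^2) <= 4 / (t^2 * mu)).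
  { unfold Rdiv. apply Rmult_le_compat_l; [lra|]. apply Rinv_le_contravar. apply Rmult_lt_0_compat; lra.
    apply Rmult_le_compat_l; [lra|]. nra. }
  assert (E1 : 4 / N + 32 / N + 4 / (t^2 * N) = C1 / N) by (unfold C1; field; split; lra).
  assert (E2 : 8 / (q0 * mu) + 24 / (t^2 * mu) + 4 / (t^2 * mu) = C2 / mu) by (unfold C2; field; repeat split; lra).
  assert (L1 : C1 / N < er / 2).
  { apply (Rmult_lt_reg_r N); auto. replace (C1 / N * N) with C1 by (field; lra).
    apply (Rmult_lt_reg_r (2 / er)). apply Rdiv_lt_0_compat; lra.
    replace (er / 2 * N * (2 / er)) with N by (field; lra). replace (C1 * (2 / er)) with (2 * C1 / er) by (field; lra). lra. }
  assert (L2 : C2 / mu < er / 2).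
  { apply (Rmult_lt_reg_r mu); auto. replace (C2 / mu * mu) with C2 by (field; lra).
    apply (Rmult_lt_reg_r (2 / er)). apply Rdiv_lt_0_compat; lra.
    replace (er / 2 * mu * (2 / er)) with mu by (field; lra). replace (C2 * (2 / er)) with (2 * C2 / er) by (field; lra). lra. }
  lra.
Qed.
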